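(* Let $N\ge1$, $\sigma>0$, let $\psi:[0,2]\to[0,+\infty)$ be a decreasing $C^1$ function with $\psi(2)=0$ and $\psi'(2)<0$, and let $(x_i,v_i)_{i=1}^N$ be the solution of $$\dot x_i=v_i,\qquad \dot v_i=-\frac{\|v_i\|^2}{\|x_i\|^2}x_i+\sum_{j=1}^N\frac{\psi_{ij}}{N}\big(R(x_j,x_i)v_j-v_i\big)+\sum_{k=1}^N\frac{\sigma}{N}\big(\|x_i\|^2x_k-\langle x_i,x_k\rangle x_i\big),\quad \psi_{ij}=\psi(\|x_i-x_j\|),$$ with initial data satisfying $\|x_i(0)\|=1$, $\langle v_i(0),x_i(0)\rangle=0$ for all $i$. If $2\sigma>N^2\mathcal{E}(0)$, then the system has time-asymptotic flocking on the unit sphere, i.e. $$\lim_{t\to\infty}\max_{1\le i,j\le N}\|x_i(t)+x_j(t)\|\,\big\|R(x_j(t),x_i(t))v_j(t)-v_i(t)\big\|=0\quad\text{and}\quad \liminf_{t\ge0}\min_{1\le i,j\le N}\|x_i(t)+x_j(t)\|>0.$$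
   Context: $\|\cdot\|$ is the Euclidean norm, $\langle\cdot,\cdot\rangle$ the inner product on $\mathbb{R}^3$. For column vectors $x_1,x_2$ in the unit sphere with $x_1\ne-x_2$, $R(x_1,x_2)=I$ if $x_1=x_2$, and otherwise $R(x_1,x_2)=\langle x_1,x_2\rangle I-x_1x_2^T+x_2x_1^T+(1-\langle x_1,x_2\rangle)uu^T$, $u=\frac{x_1\times x_2}{\|x_1\times x_2\|}$. When $x_j=-x_i$, $\psi_{ij}R(x_j,x_i)v_j$ and $\|x_i+x_j\|\,\|R(x_j,x_i)v_j-v_i\|$ are taken to be $0$. The energy is $\mathcal{E}=\frac1N\sum_{k=1}^N\|v_k\|^2+\frac{\sigma}{2N^2}\sum_{k,l=1}^N\|x_k-x_l\|^2$. ''Time-asymptotic flocking on a sphere'' means exactly the two displayed conditions (velocity alignment and antipodal points avoidance). *)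

(* Defs.v *)
From Stdlib Require Import Reals Lra.
From Coquelicot Require Import Coquelicot.
Open Scope R_scope.

Definition vec3 : Type := (R * R * R)%type.

Definition vx (a : vec3) : R := fst (fst a).
Definition vy (a : vec3) : R := snd (fst a).
Definition vz (a : vec3) : R := snd a.
Definition mkv (a b c : R) : vec3 := (a, b, c).

Definition vadd (a b : vec3) : vec3 := mkv (vx a + vx b) (vy a + vy b) (vz a + vz b).
Definition vsub (a b : vec3) : vec3 := mkv (vx a - vx b) (vy a - vy b) (vz a - vz b).
Definition vscal (c : R) (a : vec3) : vec3 := mkv (c * vx a) (c * vy a) (c * vz a).
Definition vzero : vec3 := mkv 0 0 0.

Definition vdot (a b : vec3) : R := vx a * vx b + vy a * vy b + vz a * vz b.
Definition vnorm (a : vec3) : R := sqrt (vdot a a).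
Definition vcross (a b : vec3) : vec3 :=
  mkv (vy a * vz b - vz a * vy b) (vz a * vx b - vx a * vz b) (vx a * vy b - vy a * vx b).

Definition vec3_eq_dec (a b : vec3) : {a = b} + {a <> b}.
Proof.
  destruct a as [[a1 a2] a3], b as [[b1 b2] b3].
  destruct (Req_EM_T a1 b1) as [e1|n1]; [|right; congruence].
  destruct (Req_EM_T a2 b2) as [e2|n2]; [|right; congruence].
  destruct (Req_EM_T a3 b3) as [e3|n3]; [|right; congruence].
  left; subst; reflexivity.
Defined.

(** [Rapp x1 x2 w] is the matrix-vector product R(x1,x2) w, with
    R(x1,x2) = I if x1 = x2, and otherwise
    R(x1,x2) = <x1,x2> I - x1 x2^T + x2 x1^T + (1 - <x1,x2>) u u^T,
    u = (x1 x x2)/||x1 x x2||.  When x1 = -x2 the product is taken to be 0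
    (the convention of the paper: psi_ij R(x_j,x_i) v_j := 0). *)
Definition Rapp (x1 x2 w : vec3) : vec3 :=
  if vec3_eq_dec x1 x2 then w
  else if vec3_eq_dec x1 (vscal (-1) x2) then vzero
  else
    let u := vscal (/ vnorm (vcross x1 x2)) (vcross x1 x2) in
    vadd (vadd (vsub (vscal (vdot x1 x2) w) (vscal (vdot x2 w) x1))
               (vscal (vdot x1 w) x2))
         (vscal ((1 - vdot x1 x2) * vdot u w) u).

Fixpoint rsum (n : nat) (f : nat -> R) : R :=
  match n with O => 0 | S m => rsum m f + f m end.

Fixpoint vsum (n : nat) (f : nat -> vec3) : vec3 :=
  match n with O => vzero | S m => vadd (vsum m f) (f m) end.

Fixpoint rmax (n : nat) (f : nat -> R) : R :=
  match n with
  | O => 0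
  | S O => f O
  | S m => Rmax (rmax m f) (f m)
  end.

Fixpoint rmin (n : nat) (f : nat -> R) : R :=
  match n with
  | O => 0
  | S O => f O
  | S m => Rmin (rmin m f) (f m)
  end.

Definition rmax2 (n : nat) (f : nat -> nat -> R) : R := rmax n (fun i => rmax n (f i)).
Definition rmin2 (n : nat) (f : nat -> nat -> R) : R := rmin n (fun i => rmin n (f i)).

Definition is_derive3 (f : R -> vec3) (t : R) (d : vec3) : Prop :=
  is_derive (fun s => vx (f s)) t (vx d) /\
  is_derive (fun s => vy (f s)) t (vy d) /\
  is_derive (fun s => vz (f s)) t (vz d).

Definition right_cont3 (f : R -> vec3) (t : R) : Prop :=
  filterlim (fun s => vx (f s)) (at_right t) (locally (vx (f t))) /\
  filterlim (fun s => vy (f s)) (at_right t) (locally (vy (f t))) /\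
  filterlim (fun s => vz (f s)) (at_right t) (locally (vz (f t))).

Definition in02 (r : R) : Prop := 0 <= r <= 2.

Definition deriv_within02 (f : R -> R) (r l : R) : Prop :=
  filterlim (fun h => (f (r + h) - f r) / h)
            (within (fun h => h <> 0 /\ in02 (r + h)) (locally 0))
            (locally l).

Definition admissible_psi (psi : R -> R) : Prop :=
  (forall r, in02 r -> 0 <= psi r) /\
  (forall r s, in02 r -> in02 s -> r <= s -> psi s <= psi r) /\
  (exists dpsi : R -> R,
      (forall r, in02 r -> deriv_within02 psi r (dpsi r)) /\
      (forall r, in02 r -> filterlim dpsi (within in02 (locally r)) (locally (dpsi r))) /\
      dpsi 2 < 0) /\
  psi 2 = 0.

Definition vel_rhs (N : nat) (sigma : R) (psi : R -> R)
           (x v : nat -> vec3) (i : nat) : vec3 :=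
  vadd (vadd
    (vscal (- (vnorm (v i) ^ 2 / vnorm (x i) ^ 2)) (x i))
    (vsum N (fun j => vscal (psi (vnorm (vsub (x i) (x j))) / INR N)
                            (vsub (Rapp (x j) (x i) (v j)) (v i)))))
    (vsum N (fun k => vscal (sigma / INR N)
                            (vsub (vscal (vnorm (x i) ^ 2) (x k))
                                  (vscal (vdot (x i) (x k)) (x i))))).

Definition is_solution (N : nat) (sigma : R) (psi : R -> R)
           (x v : nat -> R -> vec3) : Prop :=
  forall i, (i < N)%nat ->
    right_cont3 (x i) 0 /\ right_cont3 (v i) 0 /\
    forall t, 0 < t ->
      is_derive3 (x i) t (v i t) /\
      is_derive3 (v i) t (vel_rhs N sigma psi (fun j => x j t) (fun j => v j t) i).

Definition energy (N : nat) (sigma : R) (x v : nat -> vec3) : R :=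
  / INR N * rsum N (fun k => vnorm (v k) ^ 2)
  + sigma / (2 * INR N ^ 2) * rsum N (fun k => rsum N (fun l => vnorm (vsub (x k) (x l)) ^ 2)).

(* Main.v *)
Require Import Defs.
From Stdlib Require Import Reals Lra Lia Psatz Classical.
From Coquelicot Require Import Coquelicot.
Open Scope R_scope.

Ltac vsimp := unfold vdot, vadd, vsub, vscal, vcross, vzero, mkv, vx, vy, vz in *; simpl in *.

Lemma vdot_comm a b : vdot a b = vdot b a.
Proof. vsimp; ring. Qed.
Lemma vdot_addl a b c : vdot (vadd a b) c = vdot a c + vdot b c.
Proof. vsimp; ring. Qed.
Lemma vdot_addr a b c : vdot c (vadd a b) = vdot c a + vdot c b.
Proof. vsimp; ring. Qed.
Lemma vdot_subl a b c : vdot (vsub a b) c = vdot a c - vdot b c.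
Proof. vsimp; ring. Qed.
Lemma vdot_subr a b c : vdot c (vsub a b) = vdot c a - vdot c b.
Proof. vsimp; ring. Qed.
Lemma vdot_scall k a c : vdot (vscal k a) c = k * vdot a c.
Proof. vsimp; ring. Qed.
Lemma vdot_scalr k a c : vdot c (vscal k a) = k * vdot c a.
Proof. vsimp; ring. Qed.
Lemma vdot_zerol a : vdot vzero a = 0.
Proof. vsimp; ring. Qed.
Lemma vdot_zeror a : vdot a vzero = 0.
Proof. vsimp; ring. Qed.
Lemma vdot_ge0 a : 0 <= vdot a a.
Proof. vsimp; nra. Qed.
Lemma vnorm_sq a : vnorm a ^ 2 = vdot a a.
Proof. unfold vnorm. rewrite pow2_sqrt; [reflexivity| apply vdot_ge0]. Qed.
Lemma vnorm_ge0 a : 0 <= vnorm a.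
Proof. apply sqrt_pos. Qed.
Lemma vdot_vsum a n f : vdot a (vsum n f) = rsum n (fun k => vdot a (f k)).
Proof. induction n; simpl. apply vdot_zeror. rewrite vdot_addr, IHn; reflexivity. Qed.
Lemma lagrange a b : vdot a a * vdot b b - vdot a b ^ 2 = vdot (vcross a b) (vcross a b).
Proof. vsimp; ring. Qed.
Lemma cauchy_schwarz a b : vdot a b ^ 2 <= vdot a a * vdot b b.
Proof. pose proof (lagrange a b). pose proof (vdot_ge0 (vcross a b)). lra. Qed.

Lemma rsum_ext n f g : (forall k, (k < n)%nat -> f k = g k) -> rsum n f = rsum n g.
Proof. induction n; simpl; intros H; auto. rewrite IHn by (intros; apply H; lia). rewrite H by lia; reflexivity. Qed.
Lemma rsum_plus n f g : rsum n (fun k => f k + g k) = rsum n f + rsum n g.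
Proof. induction n; simpl. ring. rewrite IHn; ring. Qed.
Lemma rsum_minus n f g : rsum n (fun k => f k - g k) = rsum n f - rsum n g.
Proof. induction n; simpl. ring. rewrite IHn; ring. Qed.
Lemma rsum_scal n c f : rsum n (fun k => c * f k) = c * rsum n f.
Proof. induction n; simpl. ring. rewrite IHn; ring. Qed.
Lemma rsum_const n c : rsum n (fun _ => c) = INR n * c.
Proof. induction n; simpl rsum. simpl; ring. rewrite IHn, S_INR; ring. Qed.
Lemma rsum_le n f g : (forall k, (k < n)%nat -> f k <= g k) -> rsum n f <= rsum n g.
Proof. induction n; simpl; intros H. lra. pose proof (H n ltac:(lia)). pose proof (IHn ltac:(intros; apply H; lia)). lra. Qed.
Lemma rsum_nonneg n f : (forall k, (k < n)%nat -> 0 <= f k) -> 0 <= rsum n f.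
Proof. intros H. rewrite <- (Rmult_0_r (INR n)), <- rsum_const. apply rsum_le; auto. Qed.
Lemma rsum_abs n f : Rabs (rsum n f) <= rsum n (fun k => Rabs (f k)).
Proof. induction n; simpl. rewrite Rabs_R0; lra. eapply Rle_trans. apply Rabs_triang. lra. Qed.
Lemma rsum_term n f i : (forall k, (k < n)%nat -> 0 <= f k) -> (i < n)%nat -> f i <= rsum n f.
Proof.
  induction n; intros H Hi. lia. simpl.
  destruct (Nat.eq_dec i n). subst. pose proof (rsum_nonneg n f ltac:(intros; apply H; lia)). lra.
  pose proof (IHn ltac:(intros; apply H; lia) ltac:(lia)). pose proof (H n ltac:(lia)). lra.
Qed.
Lemma rsum_two n f i j : (forall k, (k < n)%nat -> 0 <= f k) -> (i < n)%nat -> (j < n)%nat -> i <> j ->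
  f i + f j <= rsum n f.
Proof.
  induction n; intros H Hi Hj Hij. lia. simpl.
  assert (Hn : forall k, (k < n)%nat -> 0 <= f k) by (intros; apply H; lia).
  destruct (Nat.eq_dec i n). subst. pose proof (rsum_term n f j Hn ltac:(lia)). lra.
  destruct (Nat.eq_dec j n). subst. pose proof (rsum_term n f i Hn ltac:(lia)). lra.
  pose proof (IHn Hn ltac:(lia) ltac:(lia) Hij). pose proof (H n ltac:(lia)). lra.
Qed.
Lemma rsum_swap n m f : rsum n (fun k => rsum m (fun l => f k l)) = rsum m (fun l => rsum n (fun k => f k l)).
Proof.
  induction n; simpl. induction m; simpl; auto. rewrite <- IHm; ring.
  rewrite IHn. rewrite <- rsum_plus. reflexivity.
Qed.

Definition Proj (p : vec3 -> R) := p = vx \/ p = vy \/ p = vz.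
Lemma p_add p a b : Proj p -> p (vadd a b) = p a + p b.
Proof. intros [ -> | [ -> | -> ] ]; reflexivity. Qed.
Lemma p_sub p a b : Proj p -> p (vsub a b) = p a - p b.
Proof. intros [ -> | [ -> | -> ] ]; reflexivity. Qed.
Lemma p_scal p c a : Proj p -> p (vscal c a) = c * p a.
Proof. intros [ -> | [ -> | -> ] ]; reflexivity. Qed.
Lemma p_vsum p n f : Proj p -> p (vsum n f) = rsum n (fun k => p (f k)).
Proof. intros Hp. induction n; simpl. destruct Hp as [ -> | [ -> | -> ] ]; reflexivity. rewrite p_add by auto. rewrite IHn; auto. Qed.
Lemma p_le p a : Proj p -> Rabs (p a) <= vnorm a.
Proof.
  intros Hp. unfold vnorm. rewrite <- sqrt_Rsqr_abs. apply sqrt_le_1_alt.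
  unfold Rsqr. destruct Hp as [ -> | [ -> | -> ] ]; vsimp; nra.
Qed.

Lemma vec_ext a b : vx a = vx b -> vy a = vy b -> vz a = vz b -> a = b.
Proof. destruct a as [[a1 a2] a3], b as [[b1 b2] b3]; unfold vx, vy, vz; simpl; intros; subst; reflexivity. Qed.

Lemma Rapp_dot x1 x2 w : exists e, Rabs e <= 1 + Rabs (vdot x2 x2) /\ vdot x2 (Rapp x1 x2 w) = e * vdot x1 w.
Proof.
  unfold Rapp. destruct (vec3_eq_dec x1 x2) as [<-|n1].
  - exists 1. split. pose proof (Rabs_pos (vdot x1 x1)). rewrite Rabs_R1; lra. ring.
  - destruct (vec3_eq_dec x1 (vscal (-1) x2)) as [e|n2].
    + exists 0. split. pose proof (Rabs_pos (vdot x2 x2)). rewrite Rabs_R0; lra. rewrite vdot_zeror; ring.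
    + exists (vdot x2 x2). split. pose proof (Rabs_pos (vdot x2 x2)). lra.
      cbv zeta. rewrite !vdot_addr, vdot_subr, !vdot_scalr.
      replace (vdot x2 (vcross x1 x2)) with 0 by (vsimp; ring).
      rewrite (vdot_comm x2 x1). ring.
Qed.

Definition sm (x1 x2 w : vec3) : vec3 :=
  vadd (vadd (vscal (vdot x1 x2) w) (vcross (vcross x1 x2) w))
       (vscal (vdot (vcross x1 x2) w / (1 + vdot x1 x2)) (vcross x1 x2)).

Lemma unit_c_bound x1 x2 : vdot x1 x1 = 1 -> vdot x2 x2 = 1 ->
  vdot (vsub x1 x2) (vsub x1 x2) = 2 - 2 * vdot x1 x2 /\
  vdot (vadd x1 x2) (vadd x1 x2) = 2 + 2 * vdot x1 x2.
Proof. intros h1 h2. split; [rewrite !vdot_subl, !vdot_subr|rewrite !vdot_addl, !vdot_addr]; rewrite (vdot_comm x2 x1); lra. Qed.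

Lemma zero_vec a : vdot a a = 0 -> a = vzero.
Proof. destruct a as [[a1 a2] a3]. vsimp. intros H. apply vec_ext; vsimp; nra. Qed.

Lemma unit_not_antipodal x1 x2 : vdot x1 x1 = 1 -> vdot x2 x2 = 1 -> x1 <> vscal (-1) x2 -> 0 < 1 + vdot x1 x2.
Proof.
  intros h1 h2 hn. destruct (unit_c_bound x1 x2 h1 h2) as [_ H].
  pose proof (vdot_ge0 (vadd x1 x2)).
  destruct (Rle_lt_dec (1 + vdot x1 x2) 0); [|lra].
  exfalso. apply hn. assert (vdot (vadd x1 x2) (vadd x1 x2) = 0) by lra.
  apply zero_vec in H1. apply vec_ext; destruct x1 as [[? ?] ?], x2 as [[? ?] ?]; vsimp; injection H1; intros; lra.
Qed.

Lemma unit_ne x1 x2 : vdot x1 x1 = 1 -> vdot x2 x2 = 1 -> x1 <> x2 -> vdot x1 x2 < 1.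
Proof.
  intros h1 h2 hn. destruct (unit_c_bound x1 x2 h1 h2) as [H _].
  pose proof (vdot_ge0 (vsub x1 x2)).
  destruct (Rle_lt_dec 1 (vdot x1 x2)); [|lra].
  exfalso. apply hn. assert (vdot (vsub x1 x2) (vsub x1 x2) = 0) by lra.
  apply zero_vec in H1. apply vec_ext; destruct x1 as [[? ?] ?], x2 as [[? ?] ?]; vsimp; injection H1; intros; lra.
Qed.

Lemma scal_aux c n K a : n <> 0 -> 1 + c <> 0 -> n * n = (1 - c) * (1 + c) ->
  (1 - c) * (/ n * K) * (/ n * a) = K / (1 + c) * a.
Proof.
  intros hn hc hnn. replace (1 - c) with (n * n / (1 + c)) by (rewrite hnn; field; auto).
  field; auto.
Qed.

Lemma Rapp_sm x1 x2 w : vdot x1 x1 = 1 -> vdot x2 x2 = 1 -> x1 <> vscal (-1) x2 ->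
  Rapp x1 x2 w = sm x1 x2 w.
Proof.
  intros h1 h2 hn. pose proof (unit_not_antipodal x1 x2 h1 h2 hn) as hc.
  unfold Rapp, sm. destruct (vec3_eq_dec x1 x2) as [<-|n1].
  - rewrite h1. replace (vcross x1 x1) with vzero by (apply vec_ext; vsimp; ring).
    apply vec_ext; vsimp; field.
  - destruct (vec3_eq_dec x1 (vscal (-1) x2)) as [e|n2]; [contradiction|].
    pose proof (unit_ne x1 x2 h1 h2 n1) as hc1.
    cbv zeta. set (k := vcross x1 x2).
    assert (hk : vdot k k = (1 - vdot x1 x2) * (1 + vdot x1 x2)).
    { unfold k; rewrite <- lagrange, h1, h2; ring. }
    assert (hnn : vnorm k * vnorm k = (1 - vdot x1 x2) * (1 + vdot x1 x2)).
    { rewrite <- hk, <- vnorm_sq; ring. }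
    assert (hn0 : vnorm k <> 0).
    { intro H0. rewrite H0 in hnn. nra. }
    rewrite vdot_scall.
    set (c := vdot x1 x2) in *. set (n := vnorm k) in *. set (K := vdot k w).
    assert (hcs : 1 + c <> 0) by lra.
    apply vec_ext; unfold vadd, vsub, vscal, mkv, vx, vy, vz; simpl;
      rewrite (scal_aux c n K) by auto;
      unfold K, k, c; unfold vcross, vdot, mkv, vx, vy, vz; simpl; ring.
Qed.

Lemma sm_norm x1 x2 w : vdot x1 x1 = 1 -> vdot x2 x2 = 1 -> 1 + vdot x1 x2 <> 0 ->
  vdot (sm x1 x2 w) (sm x1 x2 w) = vdot w w.
Proof.
  intros h1 h2 hc. unfold sm. set (k := vcross x1 x2). set (c := vdot x1 x2) in *.
  set (K := vdot k w).
  rewrite !vdot_addl, !vdot_addr, !vdot_scall, !vdot_scalr.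
  assert (e1 : vdot w (vcross k w) = 0) by (vsimp; ring).
  assert (e2 : vdot (vcross k w) w = 0) by (vsimp; ring).
  assert (e3 : vdot k (vcross k w) = 0) by (vsimp; ring).
  assert (e4 : vdot (vcross k w) k = 0) by (vsimp; ring).
  assert (e5 : vdot (vcross k w) (vcross k w) = vdot k k * vdot w w - K ^ 2) by (rewrite <- lagrange; reflexivity).
  assert (e6 : vdot k k = 1 - c ^ 2) by (unfold k, c; rewrite <- lagrange, h1, h2; ring).
  assert (e7 : vdot w k = K) by (apply vdot_comm).
  rewrite e1, e2, e3, e4, e5, e6, e7. fold K. field. auto.
Qed.

Lemma Rapp_norm x1 x2 w : vdot x1 x1 = 1 -> vdot x2 x2 = 1 -> x1 <> vscal (-1) x2 ->
  vdot (Rapp x1 x2 w) (Rapp x1 x2 w) = vdot w w.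
Proof.
  intros h1 h2 hn. rewrite Rapp_sm by auto. apply sm_norm; auto.
  pose proof (unit_not_antipodal x1 x2 h1 h2 hn); lra.
Qed.

Lemma Rapp_norm_le x1 x2 w : vdot x1 x1 = 1 -> vdot x2 x2 = 1 ->
  vdot (Rapp x1 x2 w) (Rapp x1 x2 w) <= vdot w w.
Proof.
  intros h1 h2. destruct (vec3_eq_dec x1 (vscal (-1) x2)) as [e|n].
  - unfold Rapp. destruct (vec3_eq_dec x1 x2). lra. destruct (vec3_eq_dec x1 (vscal (-1) x2)); [|contradiction].
    rewrite vdot_zerol. apply vdot_ge0.
  - rewrite Rapp_norm; auto; lra.
Qed.

Lemma dR_plus (f g : R -> R) t df dg : is_derive f t df -> is_derive g t dg -> is_derive (fun s => f s + g s) t (df + dg).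
Proof. intros; apply (is_derive_plus f g); auto. Qed.
Lemma dR_minus (f g : R -> R) t df dg : is_derive f t df -> is_derive g t dg -> is_derive (fun s => f s - g s) t (df - dg).
Proof. intros; apply (is_derive_minus f g); auto. Qed.
Lemma dR_mult (f g : R -> R) t df dg : is_derive f t df -> is_derive g t dg -> is_derive (fun s => f s * g s) t (df * g t + f t * dg).
Proof. intros; apply (is_derive_mult f g); auto. intros; apply Rmult_comm. Qed.
Lemma dR_const c t : is_derive (fun _ => c) t 0.
Proof. apply (is_derive_const c). Qed.
Lemma dR_id t : is_derive (fun s => s) t 1.
Proof. apply (@is_derive_id R_AbsRing t). Qed.
Lemma dR_ext (f g : R -> R) t d : (forall s, f s = g s) -> is_derive f t d -> is_derive g t d.
Proof. intros H Hf. apply (is_derive_ext f g); auto. Qed.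
Lemma dR_unique (f : R -> R) t d1 d2 : is_derive f t d1 -> is_derive f t d2 -> d1 = d2.
Proof. intros H1 H2. pose proof (is_derive_unique f t d1 H1). pose proof (is_derive_unique f t d2 H2). congruence. Qed.

Lemma dR_rsum n (f : nat -> R -> R) d t : (forall k, (k < n)%nat -> is_derive (f k) t (d k)) ->
  is_derive (fun s => rsum n (fun k => f k s)) t (rsum n d).
Proof.
  induction n; intros H; simpl. apply dR_const.
  apply dR_plus. apply IHn; intros; apply H; lia. apply H; lia.
Qed.

Lemma dp_of3 (f : R -> vec3) t d p : Proj p -> is_derive3 f t d -> is_derive (fun s => p (f s)) t (p d).
Proof. intros [ -> | [ -> | -> ] ] [h1 [h2 h3]]; auto. Qed.

Lemma d3_of_p (f : R -> vec3) t d : (forall p, Proj p -> is_derive (fun s => p (f s)) t (p d)) -> is_derive3 f t d.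
Proof. intros H. unfold Proj in H. split; [|split]; apply H; auto. Qed.

Lemma d3_sub f g t df dg : is_derive3 f t df -> is_derive3 g t dg -> is_derive3 (fun s => vsub (f s) (g s)) t (vsub df dg).
Proof. intros [a1 [a2 a3]] [b1 [b2 b3]]. split; [|split]; simpl; apply dR_minus; auto. Qed.



Lemma dR_vdot f g t df dg : is_derive3 f t df -> is_derive3 g t dg ->
  is_derive (fun s => vdot (f s) (g s)) t (vdot df (g t) + vdot (f t) dg).
Proof.
  intros [a1 [a2 a3]] [b1 [b2 b3]].
  pose proof (dR_plus _ _ _ _ _ (dR_plus _ _ _ _ _ (dR_mult _ _ _ _ _ a1 b1) (dR_mult _ _ _ _ _ a2 b2)) (dR_mult _ _ _ _ _ a3 b3)) as H.
  unfold vdot. eapply is_derive_ext; [|replace (vx df * vx (g t) + vy df * vy (g t) + vz df * vz (g t) + (vx (f t) * vx dg + vy (f t) * vy dg + vz (f t) * vz dg)) with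
   ((vx df * vx (g t) + vx (f t) * vx dg) + (vy df * vy (g t) + vy (f t) * vy dg) + (vz df * vz (g t) + vz (f t) * vz dg)) by ring; exact H].
  intros; reflexivity.
Qed.

Definition RC (f : R -> R) (a : R) := filterlim f (at_right a) (locally (f a)).

Lemma RC_plus f g a : RC f a -> RC g a -> RC (fun s => f s + g s) a.
Proof. intros Hf Hg. unfold RC. apply (filterlim_comp_2 (G:=locally (f a)) (H:=locally (g a)) f g Rplus); auto. apply (filterlim_plus (f a) (g a)). Qed.
Lemma RC_mult f g a : RC f a -> RC g a -> RC (fun s => f s * g s) a.
Proof. intros Hf Hg. unfold RC. apply (filterlim_comp_2 (G:=locally (f a)) (H:=locally (g a)) f g Rmult); auto. apply (filterlim_mult (f a) (g a)). Qed.
Lemma RC_const c a : RC (fun _ => c) a.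
Proof. unfold RC. apply filterlim_const. Qed.
Lemma RC_opp f a : RC f a -> RC (fun s => - f s) a.
Proof. intros H. pose proof (RC_mult (fun _ => -1) f a (RC_const _ _) H) as H2. unfold RC in *. replace (- f a) with (-1 * f a) by ring. eapply filterlim_ext. 2: exact H2. intros; simpl; ring. Qed.
Lemma RC_minus f g a : RC f a -> RC g a -> RC (fun s => f s - g s) a.
Proof. intros; apply RC_plus; auto; apply RC_opp; auto. Qed.
Lemma RC_ext f g a : (forall s, f s = g s) -> RC f a -> RC g a.
Proof. intros H Hf. unfold RC. rewrite <- H. eapply filterlim_ext; eauto. Qed.
Lemma RC_rsum n (f : nat -> R -> R) a : (forall k, (k < n)%nat -> RC (f k) a) -> RC (fun s => rsum n (fun k => f k s)) a.
Proof. induction n; intros H; simpl. apply RC_const. apply RC_plus. apply IHn; intros; apply H; lia. apply H; lia. Qed.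

Lemma cont_of_derive f a d : is_derive f a d -> continuity_pt f a.
Proof. intros H. apply continuity_pt_filterlim. apply (ex_derive_continuous f a). exists d; auto. Qed.

Lemma RC_of_derive f a d : is_derive f a d -> RC f a.
Proof.
  intros H. apply cont_of_derive, continuity_pt_filterlim in H. unfold RC.
  intros P HP. apply H in HP. unfold filtermap in *. unfold at_right, within. eapply filter_imp; [|exact HP]. simpl; auto.
Qed.

Lemma RC_eps f a : RC f a -> forall eps, 0 < eps -> exists d, 0 < d /\ forall s, a < s < a + d -> Rabs (f s - f a) < eps.
Proof.
  intros H eps He. apply filterlim_locally with (eps := mkposreal eps He) in H.
  destruct H as [d Hd]. exists d. split. apply cond_pos. intros s Hs.
  assert (hb : ball a d s). { unfold ball; simpl; unfold AbsRing_ball, abs, minus, plus, opp; simpl. rewrite Rabs_right; lra. }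
  specialize (Hd s hb ltac:(lra)). unfold ball in Hd; simpl in Hd; unfold AbsRing_ball, abs, minus, plus, opp in Hd; simpl in Hd. exact Hd.
Qed.

Lemma ML f df a b : a < b -> RC f a -> (forall s, a < s <= b -> is_derive f s (df s)) ->
  (forall s, a < s <= b -> df s <= 0) -> f b <= f a.
Proof.
  intros hab hrc hd hneg. destruct (Rle_lt_dec (f b) (f a)) as [|hlt]; auto. exfalso.
  destruct (RC_eps f a hrc (f b - f a) ltac:(lra)) as [d [hd0 hdd]].
  set (s0 := Rmin (a + d / 2) ((a + b) / 2)).
  assert (hs0 : a < s0 < b /\ s0 < a + d).
  { unfold s0. unfold Rmin; destruct (Rle_dec _ _); lra. }
  specialize (hdd s0 ltac:(lra)).
  destruct (MVT_gen f s0 b df) as [c [hc e]].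
  - intros y; rewrite Rmin_left, Rmax_right by lra; intros; apply hd; lra.
  - intros y; rewrite Rmin_left, Rmax_right by lra; intros; eapply cont_of_derive, hd; lra.
  - rewrite Rmin_left, Rmax_right in hc by lra. pose proof (hneg c ltac:(lra)).
    assert (df c * (b - s0) <= 0) by (apply Rmult_le_0_r; lra).
    apply Rabs_def2 in hdd. lra.
Qed.

Definition rs2 n (f : nat -> nat -> R) := rsum n (fun k => rsum n (fun l => f k l)).
Lemma rs2_ext n f g : (forall k l, (k < n)%nat -> (l < n)%nat -> f k l = g k l) -> rs2 n f = rs2 n g.
Proof. intros H; unfold rs2; apply rsum_ext; intros; apply rsum_ext; intros; auto. Qed.
Lemma rs2_plus n f g : rs2 n (fun k l => f k l + g k l) = rs2 n f + rs2 n g.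
Proof. unfold rs2. rewrite <- rsum_plus. apply rsum_ext; intros. apply rsum_plus. Qed.
Lemma rs2_scal n c f : rs2 n (fun k l => c * f k l) = c * rs2 n f.
Proof. unfold rs2. rewrite <- rsum_scal. apply rsum_ext; intros. apply rsum_scal. Qed.
Lemma rs2_swap n f : rs2 n f = rs2 n (fun k l => f l k).
Proof. unfold rs2. apply rsum_swap. Qed.
Lemma rs2_le n f g : (forall k l, (k < n)%nat -> (l < n)%nat -> f k l <= g k l) -> rs2 n f <= rs2 n g.
Proof. intros H; unfold rs2; apply rsum_le; intros; apply rsum_le; intros; auto. Qed.
Lemma rs2_nonneg n f : (forall k l, (k < n)%nat -> (l < n)%nat -> 0 <= f k l) -> 0 <= rs2 n f.
Proof. intros H; unfold rs2; apply rsum_nonneg; intros; apply rsum_nonneg; intros; auto. Qed.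
Lemma rs2_term n f i j : (forall k l, (k < n)%nat -> (l < n)%nat -> 0 <= f k l) -> (i < n)%nat -> (j < n)%nat -> f i j <= rs2 n f.
Proof.
  intros H hi hj. unfold rs2. eapply Rle_trans. apply (rsum_term n (f i) j (fun k hk => H i k hi hk)); auto.
  apply (rsum_term n (fun k => rsum n (fun l => f k l)) i); auto. intros; apply rsum_nonneg; auto.
Qed.
Lemma rs2_two n f i j : (forall k l, (k < n)%nat -> (l < n)%nat -> 0 <= f k l) -> (i < n)%nat -> (j < n)%nat -> i <> j ->
  f i j + f j i <= rs2 n f.
Proof.
  intros H hi hj hij. unfold rs2.
  eapply Rle_trans. 2:{ apply (rsum_two n (fun k => rsum n (fun l => f k l)) i j); auto. intros; apply rsum_nonneg; auto. }
  apply Rplus_le_compat; [apply (rsum_term n (f i) j (fun k hk => H i k hi hk) hj) | apply (rsum_term n (f j) i (fun k hk => H j k hj hk) hi)].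
Qed.

Definition X (x : nat -> R -> vec3) t := fun k => x k t.
Definition Inv N (x v : nat -> R -> vec3) t := forall i, (i < N)%nat -> vdot (x i t) (x i t) = 1 /\ vdot (x i t) (v i t) = 0.
Definition en N sigma (x v : nat -> R -> vec3) t := energy N sigma (fun k => x k t) (fun k => v k t).
Definition F N sigma (psi : R -> R) (x v : nat -> R -> vec3) t k := vel_rhs N sigma psi (fun j => x j t) (fun j => v j t) k.
Definition psij (psi : R -> R) (x : nat -> R -> vec3) t i j := psi (vnorm (vsub (x i t) (x j t))).
Definition Wv (x v : nat -> R -> vec3) t i j := vsub (Rapp (x j t) (x i t) (v j t)) (v i t).

Lemma en_vdot N sigma x v t : en N sigma x v t =
  / INR N * rsum N (fun k => vdot (v k t) (v k t)) +
  sigma / (2 * INR N ^ 2) * rs2 N (fun k l => vdot (vsub (x k t) (x l t)) (vsub (x k t) (x l t))).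
Proof.
  unfold en, energy, rs2. f_equal. f_equal. apply rsum_ext; intros; apply vnorm_sq.
  f_equal. apply rsum_ext; intros; apply rsum_ext; intros; apply vnorm_sq.
Qed.

Definition ED N sigma (psi : R -> R) (x v : nat -> R -> vec3) t :=
  / INR N * rsum N (fun k => 2 * vdot (v k t) (F N sigma psi x v t k)) +
  sigma / (2 * INR N ^ 2) * rs2 N (fun k l => 2 * vdot (vsub (x k t) (x l t)) (vsub (v k t) (v l t))).

Lemma en_deriv N sigma psi x v t : is_solution N sigma psi x v -> 0 < t ->
  is_derive (en N sigma x v) t (ED N sigma psi x v t).
Proof.
  intros Hs ht.
  assert (hx : forall k, (k < N)%nat -> is_derive3 (x k) t (v k t)) by (intros k hk; apply (Hs k hk); auto).
  assert (hv : forall k, (k < N)%nat -> is_derive3 (v k) t (F N sigma psi x v t k)) by (intros k hk; apply (Hs k hk); auto).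
  eapply dR_ext. intros s; symmetry; apply en_vdot.
  assert (H1 := dR_mult (fun _ => / INR N) _ t _ _ (dR_const (/ INR N) t)
     (dR_rsum N (fun k s => vdot (v k s) (v k s)) _ t (fun k hk => dR_vdot _ _ _ _ _ (hv k hk) (hv k hk)))).
  assert (H2 := dR_mult (fun _ => sigma / (2 * INR N ^ 2)) _ t _ _ (dR_const _ t)
     (dR_rsum N (fun k s => rsum N (fun l => vdot (vsub (x k s) (x l s)) (vsub (x k s) (x l s)))) _ t
        (fun k hk => dR_rsum N (fun l s => vdot (vsub (x k s) (x l s)) (vsub (x k s) (x l s))) _ t
          (fun l hl => dR_vdot _ _ _ _ _ (d3_sub _ _ _ _ _ (hx k hk) (hx l hl)) (d3_sub _ _ _ _ _ (hx k hk) (hx l hl)))))).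
  pose proof (dR_plus _ _ _ _ _ H1 H2) as H. simpl in H.
  unfold rs2. eapply is_derive_ext; [|replace (ED N sigma psi x v t) with
    (0 * rsum N (fun k => vdot (v k t) (v k t)) +
        / INR N * rsum N (fun k => vdot (F N sigma psi x v t k) (v k t) + vdot (v k t) (F N sigma psi x v t k)) +
        (0 * rsum N (fun k => rsum N (fun l => vdot (vsub (x k t) (x l t)) (vsub (x k t) (x l t)))) +
         sigma / (2 * INR N ^ 2) *
         rsum N (fun k => rsum N (fun l => vdot (vsub (v k t) (v l t)) (vsub (x k t) (x l t)) +
                                            vdot (vsub (x k t) (x l t)) (vsub (v k t) (v l t)))))); [exact H|]].
  intros; reflexivity.
  unfold ED, rs2. ring_simplify. f_equal. f_equal. apply rsum_ext; intros; rewrite vdot_comm; ring.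
  f_equal. apply rsum_ext; intros; apply rsum_ext; intros; rewrite (vdot_comm (vsub (v k t) _)); ring.
Qed.

Lemma rs2_lin2 n a b f g : rs2 n (fun k l => a * f k l + b * g k l) = a * rs2 n f + b * rs2 n g.
Proof. rewrite rs2_plus, !rs2_scal. reflexivity. Qed.
Lemma rs2_lin3 n a b c f g h : rs2 n (fun k l => a * f k l + b * g k l + c * h k l) = a * rs2 n f + b * rs2 n g + c * rs2 n h.
Proof. rewrite rs2_plus, rs2_lin2, rs2_scal. reflexivity. Qed.

Lemma vF N sigma psi x v t k : Inv N x v t -> (k < N)%nat ->
  vdot (v k t) (F N sigma psi x v t k) =
  rsum N (fun j => psij psi x t k j / INR N * (vdot (v k t) (Rapp (x j t) (x k t) (v j t)) - vdot (v k t) (v k t)))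
  + sigma / INR N * rsum N (fun l => vdot (v k t) (x l t)).
Proof.
  intros hI hk. destruct (hI k hk) as [h1 h2].
  unfold F, vel_rhs. rewrite !vdot_addr, vdot_scalr, !vdot_vsum.
  rewrite (vdot_comm (v k t) (x k t)), h2, Rmult_0_r, Rplus_0_l.
  rewrite <- rsum_scal. f_equal.
  - apply rsum_ext; intros. rewrite vdot_scalr, vdot_subr. unfold psij. reflexivity.
  - apply rsum_ext; intros. rewrite vdot_scalr, vdot_subr, !vdot_scalr, vnorm_sq, h1.
    rewrite (vdot_comm (v k t) (x k t)), h2. ring.
Qed.

Lemma vnorm_sub_sym a b : vnorm (vsub a b) = vnorm (vsub b a).
Proof. unfold vnorm. f_equal. vsimp. ring. Qed.

Lemma pair_id (psi : R -> R) N x v t k j : psi 2 = 0 -> Inv N x v t -> (k < N)%nat -> (j < N)%nat ->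
  psij psi x t k j * vdot (Wv x v t k j) (Wv x v t k j) =
  psij psi x t k j * vdot (v j t) (v j t) - 2 * (psij psi x t k j * vdot (v k t) (Rapp (x j t) (x k t) (v j t)))
  + psij psi x t k j * vdot (v k t) (v k t).
Proof.
  intros hp hI hk hj. destruct (hI k hk) as [hk1 _]. destruct (hI j hj) as [hj1 _].
  unfold Wv. rewrite vdot_subl, !vdot_subr. rewrite (vdot_comm (v k t) (Rapp _ _ _)).
  destruct (vec3_eq_dec (x j t) (vscal (-1) (x k t))) as [e|n].
  - unfold psij. replace (vnorm (vsub (x k t) (x j t))) with 2. rewrite hp; ring.
    rewrite e. unfold vnorm. replace (vdot (vsub (x k t) (vscal (-1) (x k t))) (vsub (x k t) (vscal (-1) (x k t)))) with (2 * 2).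
    rewrite sqrt_square; lra. rewrite <- (Rmult_1_l (vdot _ _)) in hk1. revert hk1. vsimp. intros. nra.
  - rewrite Rapp_norm by auto. ring.
Qed.

Lemma ED_eq N sigma psi x v t : psi 2 = 0 -> Inv N x v t ->
  ED N sigma psi x v t = - / INR N ^ 2 * rs2 N (fun i j => psij psi x t i j * vdot (Wv x v t i j) (Wv x v t i j)).
Proof.
  intros hp hI.
  set (ps := psij psi x t).
  set (P1 := rs2 N (fun k j => ps k j * vdot (v k t) (v k t))).
  set (P2 := rs2 N (fun k j => ps k j * vdot (v k t) (Rapp (x j t) (x k t) (v j t)))).
  set (Bs := rs2 N (fun k l => vdot (v k t) (x l t))).
  assert (e1 : rsum N (fun k => 2 * vdot (v k t) (F N sigma psi x v t k)) = 2 / INR N * P2 + (- (2 / INR N)) * P1 + 2 * sigma / INR N * Bs).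
  { unfold P1, P2, Bs. rewrite <- rs2_lin3. unfold rs2. apply rsum_ext; intros k hk.
    rewrite vF by auto. rewrite <- (rsum_scal N (sigma / INR N)), <- rsum_plus, <- rsum_scal.
    apply rsum_ext; intros j hj. unfold ps, Rdiv. ring. }
  assert (e2 : rs2 N (fun k l => 2 * vdot (vsub (x k t) (x l t)) (vsub (v k t) (v l t))) = -4 * Bs).
  { transitivity (rs2 N (fun k l => (-2) * vdot (v l t) (x k t) + (-2) * vdot (v k t) (x l t))).
    apply rs2_ext; intros k l hk hl. destruct (hI k hk) as [_ a]. destruct (hI l hl) as [_ b].
    rewrite vdot_subl, !vdot_subr, a, b. rewrite (vdot_comm (x k t) (v l t)), (vdot_comm (x l t) (v k t)). ring.
    rewrite (rs2_lin2 N (-2) (-2) (fun k l => vdot (v l t) (x k t)) (fun k l => vdot (v k t) (x l t))). unfold Bs. rewrite (rs2_swap N (fun k l => vdot (v l t) (x k t))). ring. }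
  assert (e3 : rs2 N (fun i j => ps i j * vdot (Wv x v t i j) (Wv x v t i j)) = 2 * P1 + (-2) * P2).
  { transitivity (rs2 N (fun k j => 1 * (ps k j * vdot (v j t) (v j t)) + (-2) * (ps k j * vdot (v k t) (Rapp (x j t) (x k t) (v j t))) + 1 * (ps k j * vdot (v k t) (v k t)))).
    apply rs2_ext; intros k j hk hj. unfold ps. rewrite (pair_id psi N) by auto. ring.
    rewrite (rs2_lin3 N 1 (-2) 1 (fun k j => ps k j * vdot (v j t) (v j t)) (fun k j => ps k j * vdot (v k t) (Rapp (x j t) (x k t) (v j t))) (fun k j => ps k j * vdot (v k t) (v k t))). fold P1 P2.
    assert (rs2 N (fun k j => ps k j * vdot (v j t) (v j t)) = P1).
    { rewrite rs2_swap. unfold P1. apply rs2_ext; intros. unfold ps, psij. rewrite vnorm_sub_sym. reflexivity. }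
    rewrite H. ring. }
  unfold ED. rewrite e1, e2, e3.
  assert (INR N <> 0 \/ INR N = 0) as [hn|hn] by lra.
  field. auto.
  unfold P1, P2, Bs. replace N with 0%nat. unfold rs2; simpl. ring. destruct N; auto. rewrite S_INR in hn. pose proof (pos_INR N). lra.
Qed.

Lemma RCx N sigma psi x v i p t : is_solution N sigma psi x v -> (i < N)%nat -> Proj p -> 0 <= t ->
  RC (fun s => p (x i s)) t.
Proof.
  intros Hs hi hp ht. destruct (Hs i hi) as [h0 [_ hd]]. destruct (Rle_lt_or_eq_dec 0 t ht) as [hlt|<-].
  - eapply RC_of_derive. apply dp_of3; auto. apply (hd t hlt).
  - destruct h0 as [a [b c]]. destruct hp as [ -> | [ -> | -> ] ]; auto.
Qed.
Lemma RCv N sigma psi x v i p t : is_solution N sigma psi x v -> (i < N)%nat -> Proj p -> 0 <= t ->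
  RC (fun s => p (v i s)) t.
Proof.
  intros Hs hi hp ht. destruct (Hs i hi) as [_ [h0 hd]]. destruct (Rle_lt_or_eq_dec 0 t ht) as [hlt|<-].
  - eapply RC_of_derive. apply dp_of3; auto. apply (hd t hlt).
  - destruct h0 as [a [b c]]. destruct hp as [ -> | [ -> | -> ] ]; auto.
Qed.

Definition RC3 (f : R -> vec3) t := forall p, Proj p -> RC (fun s => p (f s)) t.
Lemma RC3_sub f g t : RC3 f t -> RC3 g t -> RC3 (fun s => vsub (f s) (g s)) t.
Proof. intros hf hg p hp. eapply RC_ext. intros; symmetry; apply p_sub; auto. apply RC_minus; auto. Qed.
Lemma RC_vdot f g t : RC3 f t -> RC3 g t -> RC (fun s => vdot (f s) (g s)) t.
Proof.
  intros hf hg. unfold vdot.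
  assert (px : Proj vx) by (left; auto). assert (py : Proj vy) by (right; left; auto). assert (pz : Proj vz) by (right; right; auto).
  repeat apply RC_plus; apply RC_mult; auto.
Qed.
Lemma RC3x N sigma psi x v i t : is_solution N sigma psi x v -> (i < N)%nat -> 0 <= t -> RC3 (x i) t.
Proof. intros; intros p hp; eapply RCx; eauto. Qed.
Lemma RC3v N sigma psi x v i t : is_solution N sigma psi x v -> (i < N)%nat -> 0 <= t -> RC3 (v i) t.
Proof. intros; intros p hp; eapply RCv; eauto. Qed.

Lemma RC_en N sigma psi x v t : is_solution N sigma psi x v -> 0 <= t -> RC (en N sigma x v) t.
Proof.
  intros Hs ht. eapply RC_ext. intros; symmetry; apply en_vdot.
  apply RC_plus; apply RC_mult; try apply RC_const.
  apply RC_rsum; intros; apply RC_vdot; eapply RC3v; eauto.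
  apply RC_rsum; intros; apply RC_rsum; intros; apply RC_vdot; apply RC3_sub; eapply RC3x; eauto.
Qed.

Lemma en_lower_v N sigma x v t i : (1 <= N)%nat -> 0 < sigma -> (i < N)%nat ->
  vdot (v i t) (v i t) <= INR N * en N sigma x v t.
Proof.
  intros hN hs hi. rewrite en_vdot.
  assert (hn : 0 < INR N) by (apply lt_0_INR; lia).
  pose proof (rsum_term N (fun k => vdot (v k t) (v k t)) i (fun k _ => vdot_ge0 _) hi).
  pose proof (rs2_nonneg N (fun k l => vdot (vsub (x k t) (x l t)) (vsub (x k t) (x l t))) (fun k l _ _ => vdot_ge0 _)).
  assert (0 <= sigma / (2 * INR N ^ 2)) by (apply Rlt_le, Rdiv_lt_0_compat; nra).
  assert (0 <= sigma / (2 * INR N ^ 2) * rs2 N (fun k l => vdot (vsub (x k t) (x l t)) (vsub (x k t) (x l t)))) by nra.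
  rewrite Rmult_plus_distr_l.
  replace (INR N * (/ INR N * rsum N (fun k => vdot (v k t) (v k t)))) with (rsum N (fun k => vdot (v k t) (v k t))) by (field; lra).
  assert (0 <= INR N * (sigma / (2 * INR N ^ 2) * rs2 N (fun k l => vdot (vsub (x k t) (x l t)) (vsub (x k t) (x l t))))) by (apply Rmult_le_pos; lra).
  simpl in *. lra.
Qed.

Lemma en_lower_x N sigma x v t i j : (1 <= N)%nat -> 0 < sigma -> (i < N)%nat -> (j < N)%nat ->
  vdot (vsub (x i t) (x j t)) (vsub (x i t) (x j t)) <= INR N ^ 2 * en N sigma x v t / sigma.
Proof.
  intros hN hs hi hj. rewrite en_vdot.
  assert (hn : 0 < INR N) by (apply lt_0_INR; lia).
  set (d := fun k l => vdot (vsub (x k t) (x l t)) (vsub (x k t) (x l t))).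
  assert (hd : d i j <= rs2 N d / 2).
  { destruct (Nat.eq_dec i j) as [<-|hij].
    - pose proof (rs2_nonneg N d (fun k l _ _ => vdot_ge0 _)).
      assert (d i i = 0). { unfold d. replace (vsub (x i t) (x i t)) with vzero by (apply vec_ext; vsimp; ring). apply vdot_zerol. }
      lra.
    - pose proof (rs2_two N d i j (fun k l _ _ => vdot_ge0 _) hi hj hij).
      assert (d j i = d i j) by (unfold d; vsimp; ring). lra. }
  pose proof (rsum_nonneg N (fun k => vdot (v k t) (v k t)) (fun k _ => vdot_ge0 _)).
  fold d. apply Rle_trans with (rs2 N d / 2); auto.
  assert (hinv : 0 <= / INR N * rsum N (fun k => vdot (v k t) (v k t))) by (apply Rmult_le_pos; auto; apply Rlt_le, Rinv_0_lt_compat; auto).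
  apply (Rmult_le_reg_l sigma); auto.
  replace (sigma * (INR N ^ 2 * (/ INR N * rsum N (fun k => vdot (v k t) (v k t)) + sigma / (2 * INR N ^ 2) * rs2 N d) / sigma))
    with (INR N ^ 2 * (/ INR N * rsum N (fun k => vdot (v k t) (v k t))) + sigma * (rs2 N d / 2)) by (field; lra).
  assert (0 <= INR N ^ 2 * (/ INR N * rsum N (fun k => vdot (v k t) (v k t)))) by (apply Rmult_le_pos; auto; nra).
  lra.
Qed.

Lemma dist_le2 a b : vdot a a = 1 -> vdot b b = 1 -> vdot (vsub a b) (vsub a b) <= 4.
Proof.
  intros ha hb. destruct (unit_c_bound a b ha hb) as [e _]. pose proof (cauchy_schwarz a b). rewrite ha, hb in H. nra.
Qed.

Lemma vnorm_lt a r : 0 <= r -> vdot a a <= r ^ 2 -> vnorm a <= r.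
Proof. intros hr h. unfold vnorm. rewrite <- (sqrt_pow2 r hr). apply sqrt_le_1_alt. exact h. Qed.

Lemma psi_bounds psi d : admissible_psi psi -> 0 <= d <= 2 -> 0 <= psi d <= psi 0.
Proof.
  intros [h1 [h2 _]] hd. split. apply h1; unfold in02; lra. apply h2; unfold in02; lra.
Qed.

Lemma eps_fin (N : nat) (T : R) (P : nat -> R -> Prop) :
  (forall i, (i < N)%nat -> exists d, 0 < d /\ forall s, T < s < T + d -> P i s) ->
  exists d, 0 < d /\ forall s, T < s < T + d -> forall i, (i < N)%nat -> P i s.
Proof.
  induction N; intros H. exists 1; split; [lra|intros; lia].
  destruct IHN as [d1 [hd1 H1]]. intros; apply H; lia.
  destruct (H N ltac:(lia)) as [d2 [hd2 H2]].
  exists (Rmin d1 d2). split. apply Rmin_glb_lt; auto.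
  intros s hs i hi. pose proof (Rmin_l d1 d2). pose proof (Rmin_r d1 d2).
  destruct (Nat.eq_dec i N) as [->|]. apply H2; lra. apply H1; try lra; lia.
Qed.

Lemma lim_const f T c : continuity_pt f T -> 0 < T -> (forall u, 0 <= u < T -> f u = c) -> f T = c.
Proof.
  intros hc hT hu. destruct (Req_dec (f T) c) as [|hne]; auto. exfalso.
  destruct (hc (Rabs (f T - c))) as [d [hd hdd]]. apply Rabs_pos_lt; lra.
  set (u := Rmax 0 (T - d / 2)).
  assert (0 <= u < T /\ Rabs (u - T) < d). { unfold u, Rmax. destruct (Rle_dec 0 (T - d/2)); split; try lra; rewrite Rabs_left; lra. }
  specialize (hdd u). simpl in hdd. unfold R_dist in hdd. unfold D_x, no_cond in hdd.
  destruct (Req_dec u T). lra.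
  specialize (hdd (conj (conj I (not_eq_sym H0)) (proj2 H))). rewrite hu in hdd by lra.
  rewrite <- Rabs_Ropp in hdd. replace (- (c - f T)) with (f T - c) in hdd by ring. lra.
Qed.

Lemma xF N sigma psi x v t i : vdot (x i t) (x i t) <> 0 ->
  vdot (x i t) (F N sigma psi x v t i) = - vdot (v i t) (v i t) +
  rsum N (fun j => psij psi x t i j / INR N * (vdot (x i t) (Rapp (x j t) (x i t) (v j t)) - vdot (x i t) (v i t))).
Proof.
  intros ha. unfold F, vel_rhs. rewrite !vdot_addr, vdot_scalr, !vdot_vsum.
  rewrite !vnorm_sq.
  replace (rsum N (fun k => vdot (x i t) (vscal (sigma / INR N) (vsub (vscal (vdot (x i t) (x i t)) (x k t)) (vscal (vdot (x i t) (x k t)) (x i t)))))) with 0.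
  2:{ transitivity (rsum N (fun _ => 0)). rewrite rsum_const; ring. apply rsum_ext; intros.
      rewrite vdot_scalr, vdot_subr, !vdot_scalr. ring. }
  replace (- (vdot (v i t) (v i t) / vdot (x i t) (x i t)) * vdot (x i t) (x i t)) with (- vdot (v i t) (v i t)) by (field; auto).
  rewrite Rplus_0_r. f_equal. apply rsum_ext; intros. rewrite vdot_scalr, vdot_subr. reflexivity.
Qed.

Lemma psij_bounds psi x t i j : admissible_psi psi ->
  vdot (vsub (x i t) (x j t)) (vsub (x i t) (x j t)) <= 4 -> 0 <= psij psi x t i j <= psi 0.
Proof.
  intros hp hd. unfold psij. apply psi_bounds; auto. split. apply vnorm_ge0. apply vnorm_lt. lra. lra.
Qed.

Definition bb (x v : nat -> R -> vec3) i u := vdot (x i u) (v i u).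
Definition BB N (x v : nat -> R -> vec3) u := rsum N (fun i => bb x v i u * bb x v i u).

Lemma BB_term N x v u i : (i < N)%nat -> bb x v i u * bb x v i u <= BB N x v u.
Proof. intros hi. apply (rsum_term N (fun i => bb x v i u * bb x v i u)); auto. intros; nra. Qed.

Lemma bb_prod N x v u i j : (i < N)%nat -> (j < N)%nat -> Rabs (bb x v i u) * Rabs (bb x v j u) <= BB N x v u.
Proof.
  intros hi hj. pose proof (BB_term N x v u i hi). pose proof (BB_term N x v u j hj).
  pose proof (Rabs_pos (bb x v i u)). pose proof (Rabs_pos (bb x v j u)).
  assert (Rabs (bb x v i u) * Rabs (bb x v i u) = bb x v i u * bb x v i u) by (rewrite <- Rabs_mult; apply Rabs_right; nra).
  assert (Rabs (bb x v j u) * Rabs (bb x v j u) = bb x v j u * bb x v j u) by (rewrite <- Rabs_mult; apply Rabs_right; nra).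
  nra.
Qed.

Definition GoodPt N (x : nat -> R -> vec3) u :=
  (forall i, (i < N)%nat -> 1/2 < vdot (x i u) (x i u) < 2) /\
  (forall i j, (i < N)%nat -> (j < N)%nat -> vdot (vsub (x i u) (x j u)) (vsub (x i u) (x j u)) < 4).

Lemma BB_deriv N sigma psi x v u : (1 <= N)%nat -> is_solution N sigma psi x v -> admissible_psi psi -> 0 < u -> GoodPt N x u ->
  exists d, is_derive (BB N x v) u d /\ d <= 8 * INR N * psi 0 * BB N x v u.
Proof.
  intros hN Hs hp hu [ha hd].
  assert (hn : 0 < INR N) by (apply lt_0_INR; lia).
  assert (hx : forall k, (k < N)%nat -> is_derive3 (x k) u (v k u)) by (intros k hk; apply (Hs k hk); auto).
  assert (hv : forall k, (k < N)%nat -> is_derive3 (v k) u (F N sigma psi x v u k)) by (intros k hk; apply (Hs k hk); auto).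
  set (r := fun i => vdot (v i u) (v i u) + vdot (x i u) (F N sigma psi x v u i)).
  assert (hb : forall i, (i < N)%nat -> is_derive (fun s => bb x v i s) u (r i)).
  { intros i hi. unfold bb, r. eapply dR_ext; [|apply dR_vdot; auto]. intros; reflexivity. }
  exists (rsum N (fun i => r i * bb x v i u + bb x v i u * r i)). split.
  { unfold BB. apply (dR_rsum N (fun i s => bb x v i s * bb x v i s)). intros i hi. apply dR_mult; auto. }
  assert (P0 : 0 <= psi 0) by (apply (psi_bounds psi 0 hp); lra).
  assert (hr : forall i, (i < N)%nat -> Rabs (r i) <= rsum N (fun j => psi 0 / INR N * (3 * Rabs (bb x v j u) + Rabs (bb x v i u)))).
  { intros i hi. unfold r. destruct (ha i hi) as [ha1 ha2].
    rewrite (xF N sigma psi x v u i) by lra.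
    replace (vdot (v i u) (v i u) + (- vdot (v i u) (v i u) + rsum N _)) with
      (rsum N (fun j => psij psi x u i j / INR N * (vdot (x i u) (Rapp (x j u) (x i u) (v j u)) - vdot (x i u) (v i u)))) by ring.
    eapply Rle_trans. apply rsum_abs. apply rsum_le. intros j hj.
    destruct (psij_bounds psi x u i j hp ltac:(apply Rlt_le, hd; auto)) as [p1 p2].
    destruct (Rapp_dot (x j u) (x i u) (v j u)) as [e [he1 he2]]. rewrite he2.
    rewrite Rabs_mult. unfold Rdiv. rewrite Rabs_mult. rewrite (Rabs_right (psij psi x u i j)) by lra.
    rewrite (Rabs_right (/ INR N)) by (apply Rle_ge, Rlt_le, Rinv_0_lt_compat; auto).
    assert (hinv : 0 < / INR N) by (apply Rinv_0_lt_compat; auto).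
    rewrite (Rabs_right (vdot (x i u) (x i u))) in he1 by lra.
    assert (Rabs (e * vdot (x j u) (v j u) - vdot (x i u) (v i u)) <= 3 * Rabs (bb x v j u) + Rabs (bb x v i u)).
    { unfold bb. eapply Rle_trans. apply Rabs_triang. rewrite Rabs_Ropp, Rabs_mult.
      pose proof (Rabs_pos (vdot (x j u) (v j u))). nra. }
    pose proof (Rabs_pos (e * vdot (x j u) (v j u) - vdot (x i u) (v i u))).
    apply Rmult_le_compat; try nra. }
  set (B := BB N x v u).
  apply Rle_trans with (rsum N (fun _ => 8 * psi 0 * B)).
  2:{ rewrite rsum_const. lra. }
  apply rsum_le. intros i hi.
  assert (2 * (Rabs (bb x v i u) * Rabs (r i)) <= 8 * psi 0 * B).
  { pose proof (Rabs_pos (bb x v i u)).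
    eapply Rle_trans. apply Rmult_le_compat_l. lra. apply Rmult_le_compat_l. auto. apply (hr i hi).
    rewrite <- rsum_scal. rewrite <- rsum_scal.
    apply Rle_trans with (rsum N (fun _ => 2 * (psi 0 / INR N * (4 * B)))).
    apply rsum_le. intros j hj. pose proof (bb_prod N x v u i j hi hj). pose proof (bb_prod N x v u i i hi hi).
    assert (0 <= psi 0 / INR N) by (apply Rmult_le_pos; auto; apply Rlt_le, Rinv_0_lt_compat; auto).
    fold B in H0, H1. nra.
    rewrite rsum_const. apply Req_le. field. lra. }
  pose proof (Rle_abs (r i * bb x v i u)). rewrite Rabs_mult in H0. nra.
Qed.

Lemma dexp K u : is_derive (fun u => exp (-K*u)) u (-K * exp(-K*u)).
Proof. auto_derive. auto. ring. Qed.

Lemma RC_BB N sigma psi x v T : is_solution N sigma psi x v -> 0 <= T -> RC (BB N x v) T.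
Proof.
  intros Hs hT. unfold BB, bb. apply (RC_rsum N (fun i s => vdot (x i s) (v i s) * vdot (x i s) (v i s))).
  intros i hi; pose proof (RC3x N sigma psi x v i T Hs hi hT); pose proof (RC3v N sigma psi x v i T Hs hi hT).
  apply RC_mult; apply RC_vdot; auto.
Qed.

Lemma local_step N sigma psi x v T : (1 <= N)%nat -> is_solution N sigma psi x v -> admissible_psi psi -> 0 <= T ->
  Inv N x v T -> (forall i j, (i < N)%nat -> (j < N)%nat -> vdot (vsub (x i T) (x j T)) (vsub (x i T) (x j T)) < 4) ->
  exists eta, 0 < eta /\ forall s, T < s < T + eta -> Inv N x v s.
Proof.
  intros hN Hs hp hT hI hd.
  assert (hn : 0 < INR N) by (apply lt_0_INR; lia).
  assert (P0 : 0 <= psi 0) by (apply (psi_bounds psi 0 hp); lra).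
  destruct (eps_fin N T (fun i s => (1/2 < vdot (x i s) (x i s) < 2) /\
              forall j, (j < N)%nat -> vdot (vsub (x i s) (x j s)) (vsub (x i s) (x j s)) < 4)) as [eta [heta Heta]].
  { intros i hi.
    destruct (RC_eps (fun s => vdot (x i s) (x i s)) T ltac:(apply RC_vdot; eapply RC3x; eauto) (1/2) ltac:(lra)) as [d1 [hd1 H1]].
    destruct (eps_fin N T (fun j s => vdot (vsub (x i s) (x j s)) (vsub (x i s) (x j s)) < 4)) as [d2 [hd2 H2]].
    { intros j hj. specialize (hd i j hi hj).
      destruct (RC_eps (fun s => vdot (vsub (x i s) (x j s)) (vsub (x i s) (x j s))) T
        ltac:(apply RC_vdot; apply RC3_sub; eapply RC3x; eauto) (4 - vdot (vsub (x i T) (x j T)) (vsub (x i T) (x j T))) ltac:(lra)) as [d3 [hd3 H3]].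
      exists d3. split; auto. intros s hs. specialize (H3 s hs). simpl in H3. apply Rabs_def2 in H3. lra. }
    exists (Rmin d1 d2). split. apply Rmin_glb_lt; auto. intros s hs. pose proof (Rmin_l d1 d2). pose proof (Rmin_r d1 d2).
    split. specialize (H1 s ltac:(lra)). simpl in H1. apply Rabs_def2 in H1. destruct (hI i hi) as [e _]. rewrite e in H1. lra.
    intros j hj. apply H2; auto; lra. }
  assert (hG : forall s, T < s < T + eta -> GoodPt N x s).
  { intros s hs. split. intros i hi; apply (Heta s hs i hi). intros i j hi hj. apply (Heta s hs i hi); auto. }
  set (K := 8 * INR N * psi 0).
  assert (hB : forall s, T < s < T + eta -> BB N x v s <= 0).
  { intros s hs.
    set (df := fun u => Derive (BB N x v) u * exp (-K*u) + BB N x v u * (-K * exp (-K*u))).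
    assert (hder : forall u, T < u <= s -> is_derive (fun u => BB N x v u * exp (-K*u)) u (df u) /\ df u <= 0).
    { intros u hu. destruct (BB_deriv N sigma psi x v u hN Hs hp ltac:(lra) (hG u ltac:(lra))) as [d [hd1 hd2]].
      unfold df. rewrite (is_derive_unique (BB N x v) u d hd1). split.
      apply (dR_mult (BB N x v) (fun u => exp (-K*u))); auto. apply dexp.
      pose proof (exp_pos (-K*u)). fold K in hd2. nra. }
    pose proof (ML (fun u => BB N x v u * exp (-K*u)) df T s ltac:(lra)
      ltac:(apply RC_mult; [eapply RC_BB; eauto | eapply RC_of_derive; apply dexp])
      (fun u hu => proj1 (hder u hu)) (fun u hu => proj2 (hder u hu))) as Hm.
    simpl in Hm.
    assert (BB N x v T = 0). { unfold BB, bb. transitivity (rsum N (fun _ => 0)). apply rsum_ext; intros i hi. destruct (hI i hi) as [_ e]. rewrite e; ring. rewrite rsum_const; ring. }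
    rewrite H, Rmult_0_l in Hm. pose proof (exp_pos (-K*s)). nra. }
  assert (hb0 : forall s, T < s < T + eta -> forall i, (i < N)%nat -> bb x v i s = 0).
  { intros s hs i hi. pose proof (BB_term N x v s i hi). pose proof (hB s hs). nra. }
  exists eta. split; auto. intros s hs i hi. split.
  2:{ apply (hb0 s hs i hi). }
  assert (hder : forall u, T < u <= s -> is_derive (fun u => vdot (x i u) (x i u)) u 0).
  { intros u hu. assert (hx : is_derive3 (x i) u (v i u)) by (apply (Hs i hi); lra).
    pose proof (dR_vdot _ _ _ _ _ hx hx). rewrite (vdot_comm (v i u)) in H.
    pose proof (hb0 u ltac:(lra) i hi). unfold bb in H0. rewrite H0 in H. rewrite Rplus_0_r in H. exact H. }
  destruct (hI i hi) as [e1 _].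
  pose proof (ML (fun u => vdot (x i u) (x i u)) (fun _ => 0) T s ltac:(lra)
     ltac:(apply RC_vdot; eapply RC3x; eauto) hder (fun _ _ => Rle_refl 0)).
  pose proof (ML (fun u => - vdot (x i u) (x i u)) (fun _ => 0) T s ltac:(lra)
     ltac:(apply RC_opp; apply RC_vdot; eapply RC3x; eauto)
     (fun u hu => ltac:(replace 0 with (opp 0) by (compute; ring); apply (is_derive_opp (fun u => vdot (x i u) (x i u))); auto)) (fun _ _ => Rle_refl 0)).
  simpl in *. lra.
Qed.

Lemma ED_nonpos N sigma psi x v t : admissible_psi psi -> Inv N x v t -> ED N sigma psi x v t <= 0.
Proof.
  intros hp hI. rewrite ED_eq; [|apply hp|auto].
  assert (0 <= rs2 N (fun i j => psij psi x t i j * vdot (Wv x v t i j) (Wv x v t i j))).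
  { apply rs2_nonneg. intros i j hi hj. apply Rmult_le_pos. apply (psij_bounds psi x t i j hp).
    apply dist_le2; [apply (hI i hi)|apply (hI j hj)]. apply vdot_ge0. }
  assert (0 <= / INR N ^ 2). { destruct N. replace (INR 0 ^ 2) with 0 by (simpl; ring). rewrite Rinv_0. lra. apply Rlt_le, Rinv_0_lt_compat. apply pow_lt. apply lt_0_INR; lia. }
  nra.
Qed.

Lemma en_mono N sigma psi x v a b : admissible_psi psi -> is_solution N sigma psi x v -> 0 <= a -> a < b ->
  (forall s, a < s <= b -> Inv N x v s) -> en N sigma x v b <= en N sigma x v a.
Proof.
  intros hp Hs ha hab hI. apply (ML _ (ED N sigma psi x v) a b hab).
  apply (RC_en N sigma psi); auto.
  intros s hs; apply en_deriv; auto; lra.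
  intros s hs; apply ED_nonpos; auto.
Qed.

Lemma inv_all N sigma psi x v : (1 <= N)%nat -> 0 < sigma -> admissible_psi psi -> is_solution N sigma psi x v ->
  (forall i, (i < N)%nat -> vnorm (x i 0) = 1 /\ vdot (v i 0) (x i 0) = 0) ->
  2 * sigma > INR N ^ 2 * en N sigma x v 0 ->
  forall t, 0 <= t -> Inv N x v t.
Proof.
  intros hN hsig hp Hs Hi0 hE.
  assert (I0 : Inv N x v 0).
  { intros i hi. destruct (Hi0 i hi) as [a b]. split. rewrite <- vnorm_sq, a; ring. rewrite vdot_comm; auto. }
  apply NNPP. intro Hn. apply not_all_ex_not in Hn. destruct Hn as [t1 Ht1].
  apply imply_to_and in Ht1. destruct Ht1 as [ht1 hnt1].
  set (U := fun s => 0 <= s /\ forall u, 0 <= u <= s -> Inv N x v u).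
  assert (hUb : forall s, U s -> s < t1).
  { intros s [hs0 hsu]. destruct (Rlt_le_dec s t1); auto. exfalso. apply hnt1, hsu; lra. }
  destruct (completeness U) as [T [hT1 hT2]].
  { exists t1. intros s hs. apply Rlt_le, hUb; auto. }
  { exists 0. split. lra. intros u hu. replace u with 0 by lra. auto. }
  assert (hT0 : 0 <= T) by (apply hT1; split; [lra|intros u hu; replace u with 0 by lra; auto]).
  assert (F1 : forall u, 0 <= u < T -> Inv N x v u).
  { intros u hu. apply NNPP; intro hn.
    assert (is_upper_bound U u).
    { intros s [hs0 hsu]. destruct (Rle_lt_dec s u); auto. exfalso. apply hn, hsu; lra. }
    specialize (hT2 u H). lra. }
  assert (F2 : Inv N x v T).
  { destruct (Rle_lt_or_eq_dec 0 T hT0) as [hTp | <- ]; auto.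
    intros i hi.
    assert (hx : is_derive3 (x i) T (v i T)) by (apply (Hs i hi); auto).
    assert (hv : is_derive3 (v i) T (F N sigma psi x v T i)) by (apply (Hs i hi); auto).
    split.
    - apply (lim_const (fun s => vdot (x i s) (x i s))). eapply cont_of_derive, dR_vdot; eauto. auto.
      intros u hu. apply (F1 u hu i hi).
    - apply (lim_const (fun s => vdot (x i s) (v i s))). eapply cont_of_derive, dR_vdot; eauto. auto.
      intros u hu. apply (F1 u hu i hi). }
  assert (F3 : en N sigma x v T <= en N sigma x v 0).
  { destruct (Rle_lt_or_eq_dec 0 T hT0) as [hTp | <- ]; [|lra].
    apply (en_mono N sigma psi); auto. lra. intros s hs. destruct (Rle_lt_or_eq_dec s T (proj2 hs)) as [h | -> ]; auto. apply F1; lra. }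
  assert (F4 : forall i j, (i < N)%nat -> (j < N)%nat -> vdot (vsub (x i T) (x j T)) (vsub (x i T) (x j T)) < 4).
  { intros i j hi hj. pose proof (en_lower_x N sigma x v T i j hN hsig hi hj).
    assert (INR N ^ 2 * en N sigma x v T / sigma < 2).
    { apply (Rmult_lt_reg_l sigma); auto. replace (sigma * (INR N ^ 2 * en N sigma x v T / sigma)) with (INR N ^ 2 * en N sigma x v T) by (field; lra).
      assert (0 <= INR N ^ 2) by (apply pow2_ge_0). nra. }
    lra. }
  destruct (local_step N sigma psi x v T hN Hs hp hT0 F2 F4) as [eta [heta Heta]].
  assert (U (T + eta / 2)).
  { split. lra. intros u hu. destruct (Rlt_le_dec u T). apply F1; lra.
    destruct (Rle_lt_or_eq_dec T u r) as [h | <- ]; auto. apply Heta; lra. }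
  specialize (hT1 _ H). lra.
Qed.

Definition Good (f : R -> R) :=
  (exists M, forall t, 0 < t -> Rabs (f t) <= M) /\
  (exists M, forall t, 0 < t -> exists d, is_derive f t d /\ Rabs d <= M).

Lemma Good_const c : Good (fun _ => c).
Proof. split. exists (Rabs c); intros; lra. exists 0. intros t _. exists 0. split. apply dR_const. rewrite Rabs_R0; lra. Qed.

Lemma Good_plus f g : Good f -> Good g -> Good (fun t => f t + g t).
Proof.
  intros [[M1 h1] [L1 d1]] [[M2 h2] [L2 d2]]. split.
  exists (M1 + M2). intros t ht. eapply Rle_trans. apply Rabs_triang. specialize (h1 t ht); specialize (h2 t ht); lra.
  exists (L1 + L2). intros t ht. destruct (d1 t ht) as [a [ha hal]]. destruct (d2 t ht) as [b [hb hbl]].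
  exists (a + b). split. apply dR_plus; auto. eapply Rle_trans. apply Rabs_triang. lra.
Qed.

Lemma Good_mult f g : Good f -> Good g -> Good (fun t => f t * g t).
Proof.
  intros [[M1 h1] [L1 d1]] [[M2 h2] [L2 d2]]. split.
  exists (M1 * M2). intros t ht. rewrite Rabs_mult. specialize (h1 t ht); specialize (h2 t ht).
  apply Rmult_le_compat; auto; apply Rabs_pos.
  exists (L1 * M2 + M1 * L2). intros t ht. destruct (d1 t ht) as [a [ha hal]]. destruct (d2 t ht) as [b [hb hbl]].
  exists (a * g t + f t * b). split. apply dR_mult; auto. eapply Rle_trans. apply Rabs_triang. rewrite !Rabs_mult.
  specialize (h1 t ht); specialize (h2 t ht).
  pose proof (Rabs_pos a); pose proof (Rabs_pos b); pose proof (Rabs_pos (f t)); pose proof (Rabs_pos (g t)).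
  apply Rplus_le_compat; apply Rmult_le_compat; auto.
Qed.

Lemma Good_opp f : Good f -> Good (fun t => - f t).
Proof.
  intros H. pose proof (Good_mult _ _ (Good_const (-1)) H) as [[M h] [L d]]. split.
  exists M. intros t ht. specialize (h t ht). simpl in h. replace (- f t) with (-1 * f t) by ring. auto.
  exists L. intros t ht. destruct (d t ht) as [a [ha hl]]. exists a. split; auto.
  eapply dR_ext; [|exact ha]. intros; simpl; ring.
Qed.

Lemma Good_minus f g : Good f -> Good g -> Good (fun t => f t - g t).
Proof. intros; apply Good_plus; auto; apply Good_opp; auto. Qed.

Lemma Good_inv f m : Good f -> 0 < m -> (forall t, 0 < t -> m <= f t) -> Good (fun t => / f t).
Proof.
  intros [[M1 h1] [L1 d1]] hm hf. split.
  exists (/ m). intros t ht. specialize (hf t ht). rewrite Rabs_right. apply Rinv_le_contravar; auto.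
  apply Rle_ge, Rlt_le, Rinv_0_lt_compat; lra.
  exists (L1 / m ^ 2). intros t ht. destruct (d1 t ht) as [a [ha hal]]. specialize (hf t ht).
  exists (- a / f t ^ 2). split. apply is_derive_inv; auto; lra.
  unfold Rdiv. rewrite Rabs_mult, Rabs_Ropp. rewrite (Rabs_right (/ f t ^ 2)).
  2:{ apply Rle_ge, Rlt_le, Rinv_0_lt_compat, pow_lt; lra. }
  apply Rmult_le_compat; auto. apply Rabs_pos. apply Rlt_le, Rinv_0_lt_compat, pow_lt; lra.
  apply Rinv_le_contravar. apply pow_lt; lra. apply pow_incr; lra.
Qed.

Lemma Good_rsum n (f : nat -> R -> R) : (forall k, (k < n)%nat -> Good (f k)) -> Good (fun t => rsum n (fun k => f k t)).
Proof.
  induction n; intros H; simpl. apply Good_const.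
  apply (Good_plus (fun t => rsum n (fun k => f k t)) (f n)). apply IHn; intros; apply H; lia. apply H; lia.
Qed.

Definition Good3 (f : R -> vec3) := forall p, Proj p -> Good (fun t => p (f t)).

Lemma px : Proj vx. Proof. left; auto. Qed.
Lemma py : Proj vy. Proof. right; left; auto. Qed.
Lemma pz : Proj vz. Proof. right; right; auto. Qed.

Lemma Good3_add f g : Good3 f -> Good3 g -> Good3 (fun t => vadd (f t) (g t)).
Proof. intros hf hg p hp. destruct hp as [ -> | [ -> | -> ] ]; simpl; apply Good_plus; auto using px, py, pz. Qed.
Lemma Good3_sub f g : Good3 f -> Good3 g -> Good3 (fun t => vsub (f t) (g t)).
Proof. intros hf hg p hp. destruct hp as [ -> | [ -> | -> ] ]; simpl; apply Good_minus; auto using px, py, pz. Qed.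
Lemma Good3_scal c f : Good c -> Good3 f -> Good3 (fun t => vscal (c t) (f t)).
Proof. intros hc hf p hp. destruct hp as [ -> | [ -> | -> ] ]; simpl; apply Good_mult; auto using px, py, pz. Qed.
Lemma Good3_cross f g : Good3 f -> Good3 g -> Good3 (fun t => vcross (f t) (g t)).
Proof.
  intros hf hg p hp. pose proof (hf _ px). pose proof (hf _ py). pose proof (hf _ pz).
  pose proof (hg _ px). pose proof (hg _ py). pose proof (hg _ pz).
  destruct hp as [ -> | [ -> | -> ] ]; simpl; apply Good_minus; apply Good_mult; auto.
Qed.
Lemma Good_vdot f g : Good3 f -> Good3 g -> Good (fun t => vdot (f t) (g t)).
Proof.
  intros hf hg. pose proof (hf _ px). pose proof (hf _ py). pose proof (hf _ pz).
  pose proof (hg _ px). pose proof (hg _ py). pose proof (hg _ pz).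
  unfold vdot. repeat apply Good_plus; apply Good_mult; auto.
Qed.

Lemma Good3_sm x1 x2 w : Good3 x1 -> Good3 x2 -> Good3 w ->
  (exists m, 0 < m /\ forall t, 0 < t -> m <= 1 + vdot (x1 t) (x2 t)) ->
  Good3 (fun t => sm (x1 t) (x2 t) (w t)).
Proof.
  intros h1 h2 hw [m [hm hmt]]. unfold sm.
  apply Good3_add. apply Good3_add. apply Good3_scal; auto. apply Good_vdot; auto.
  apply Good3_cross; auto. apply Good3_cross; auto.
  apply Good3_scal. unfold Rdiv. apply Good_mult. apply Good_vdot; auto. apply Good3_cross; auto.
  apply (Good_inv (fun t => 1 + vdot (x1 t) (x2 t)) m); auto. apply Good_plus. apply Good_const. apply Good_vdot; auto.
  apply Good3_cross; auto.
Qed.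

Definition Hyp N sigma psi (x v : nat -> R -> vec3) :=
  (1 <= N)%nat /\ 0 < sigma /\ admissible_psi psi /\ is_solution N sigma psi x v /\
  (forall i, (i < N)%nat -> vnorm (x i 0) = 1 /\ vdot (v i 0) (x i 0) = 0) /\
  2 * sigma > INR N ^ 2 * en N sigma x v 0.

Lemma H_inv N sigma psi x v : Hyp N sigma psi x v -> forall t, 0 <= t -> Inv N x v t.
Proof. intros [a [b [c [d [e f]]]]]. eapply inv_all; eauto. Qed.

Lemma en_nonneg N sigma x v t : 0 <= sigma -> 0 <= en N sigma x v t.
Proof.
  intros hs. rewrite en_vdot. destruct N.
  unfold rs2; simpl. lra.
  assert (0 < INR (S N)) by (apply lt_0_INR; lia).
  apply Rplus_le_le_0_compat; apply Rmult_le_pos.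
  apply Rlt_le, Rinv_0_lt_compat; auto. apply rsum_nonneg; intros; apply vdot_ge0.
  apply Rmult_le_pos; auto. apply Rlt_le, Rinv_0_lt_compat. nra.
  apply rs2_nonneg; intros; apply vdot_ge0.
Qed.

Lemma H_en N sigma psi x v : Hyp N sigma psi x v -> forall t, 0 <= t -> en N sigma x v t <= en N sigma x v 0.
Proof.
  intros hH t ht. pose proof hH as [a [b [c [d [e f]]]]].
  destruct (Rle_lt_or_eq_dec 0 t ht) as [h | <- ]; [|lra].
  apply (en_mono N sigma psi); auto. lra. intros s hs. apply (H_inv N sigma psi x v hH). lra.
Qed.

Definition Dm N sigma (x v : nat -> R -> vec3) := INR N ^ 2 * en N sigma x v 0 / sigma.

Lemma H_D N sigma psi x v : Hyp N sigma psi x v -> 0 <= Dm N sigma x v < 2.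
Proof.
  intros [a [b [c [d [e f]]]]]. unfold Dm. pose proof (en_nonneg N sigma x v 0 ltac:(lra)).
  split. apply Rmult_le_pos. apply Rmult_le_pos; auto. apply pow2_ge_0. apply Rlt_le, Rinv_0_lt_compat; auto.
  apply (Rmult_lt_reg_l sigma); auto. replace (sigma * (INR N ^ 2 * en N sigma x v 0 / sigma)) with (INR N ^ 2 * en N sigma x v 0) by (field; lra). lra.
Qed.

Lemma H_dist N sigma psi x v : Hyp N sigma psi x v -> forall t i j, 0 <= t -> (i < N)%nat -> (j < N)%nat ->
  vdot (vsub (x i t) (x j t)) (vsub (x i t) (x j t)) <= Dm N sigma x v.
Proof.
  intros hH t i j ht hi hj. pose proof hH as [a [b [c [d [e f]]]]].
  eapply Rle_trans. apply (en_lower_x N sigma x v t i j); auto. unfold Dm.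
  unfold Rdiv. apply Rmult_le_compat_r. apply Rlt_le, Rinv_0_lt_compat; auto.
  apply Rmult_le_compat_l. apply pow2_ge_0. eapply H_en; eauto.
Qed.

Definition Vb N sigma (x v : nat -> R -> vec3) := 1 + INR N * en N sigma x v 0.

Lemma H_v N sigma psi x v : Hyp N sigma psi x v -> forall t i, 0 <= t -> (i < N)%nat -> vnorm (v i t) <= Vb N sigma x v.
Proof.
  intros hH t i ht hi. pose proof hH as [a [b [c [d [e f]]]]].
  pose proof (en_lower_v N sigma x v t i a b hi). pose proof (H_en N sigma psi x v hH t ht).
  assert (0 <= INR N) by apply pos_INR.
  assert (vnorm (v i t) ^ 2 <= INR N * en N sigma x v 0). { rewrite vnorm_sq. eapply Rle_trans; eauto. apply Rmult_le_compat_l; auto. }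
  unfold Vb. pose proof (vnorm_ge0 (v i t)). nra.
Qed.

Lemma H_cpos N sigma psi x v : Hyp N sigma psi x v -> forall t i j, 0 <= t -> (i < N)%nat -> (j < N)%nat ->
  1 <= 1 + vdot (x i t) (x j t).
Proof.
  intros hH t i j ht hi hj. pose proof (H_dist N sigma psi x v hH t i j ht hi hj). pose proof (H_D N sigma psi x v hH).
  destruct (H_inv N sigma psi x v hH t ht i hi) as [h1 _]. destruct (H_inv N sigma psi x v hH t ht j hj) as [h2 _].
  destruct (unit_c_bound _ _ h1 h2) as [e _]. lra.
Qed.

Lemma H_notanti N sigma psi x v : Hyp N sigma psi x v -> forall t i j, 0 <= t -> (i < N)%nat -> (j < N)%nat ->
  x j t <> vscal (-1) (x i t).
Proof.
  intros hH t i j ht hi hj e. pose proof (H_cpos N sigma psi x v hH t i j ht hi hj).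
  destruct (H_inv N sigma psi x v hH t ht i hi) as [h1 _].
  rewrite e, vdot_scalr, h1 in H. lra.
Qed.

Lemma H_Goodx N sigma psi x v i : Hyp N sigma psi x v -> (i < N)%nat -> Good3 (x i).
Proof.
  intros hH hi p hp. pose proof hH as [a [b [c [d [e f]]]]]. split.
  - exists 1. intros t ht. eapply Rle_trans. apply p_le; auto.
    destruct (H_inv N sigma psi x v hH t ltac:(lra) i hi) as [h1 _]. apply vnorm_lt; lra.
  - exists (Vb N sigma x v). intros t ht. exists (p (v i t)). split.
    apply dp_of3; auto. apply (d i hi); auto.
    eapply Rle_trans. apply p_le; auto. apply (H_v N sigma psi x v hH); auto; lra.
Qed.

Lemma H_Fbound N sigma psi x v : Hyp N sigma psi x v -> forall t i p, 0 < t -> (i < N)%nat -> Proj p ->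
  Rabs (p (F N sigma psi x v t i)) <= Vb N sigma x v ^ 2 + 2 * psi 0 * Vb N sigma x v + 2 * sigma.
Proof.
  intros hH t i p ht hi hp. pose proof hH as [hN [hs [hpsi [hsol [e f]]]]].
  assert (hn : 0 < INR N) by (apply lt_0_INR; lia).
  set (V := Vb N sigma x v).
  assert (hV : forall k, (k < N)%nat -> vnorm (v k t) <= V) by (intros; apply (H_v N sigma psi x v hH); auto; lra).
  assert (hI := H_inv N sigma psi x v hH t ltac:(lra)).
  assert (hx1 : forall k, (k < N)%nat -> vnorm (x k t) = 1).
  { intros k hk. destruct (hI k hk) as [h1 _]. unfold vnorm. rewrite h1. apply sqrt_1. }
  assert (hpx : forall k, (k < N)%nat -> Rabs (p (x k t)) <= 1) by (intros k hk; rewrite <- (hx1 k hk); apply p_le; auto).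
  assert (hP0 : 0 <= psi 0) by (apply (psi_bounds psi 0 hpsi); lra).
  unfold F, vel_rhs. rewrite !p_add, p_scal, !p_vsum by auto.
  eapply Rle_trans. apply Rabs_triang. apply Rplus_le_compat.
  eapply Rle_trans. apply Rabs_triang. apply Rplus_le_compat.
  - rewrite Rabs_mult, hx1 by auto. rewrite Rabs_Ropp. unfold Rdiv. rewrite pow1, Rinv_1, Rmult_1_r.
    rewrite (Rabs_right (vnorm (v i t) ^ 2)) by (apply Rle_ge, pow2_ge_0). pose proof (hpx i hi). pose proof (hV i hi). pose proof (vnorm_ge0 (v i t)).
    assert (vnorm (v i t) ^ 2 <= V ^ 2) by (apply pow_incr; split; lra). pose proof (pow2_ge_0 (vnorm (v i t))). nra.
  - eapply Rle_trans. apply rsum_abs.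
    apply Rle_trans with (rsum N (fun _ => psi 0 / INR N * (2 * V))).
    2:{ rewrite rsum_const. apply Req_le. field. lra. }
    apply rsum_le. intros j hj. rewrite (p_scal p), (p_sub p) by auto. rewrite Rabs_mult.
    destruct (psij_bounds psi x t i j hpsi) as [q1 q2].
    { apply dist_le2; [apply (hI i hi)|apply (hI j hj)]. }
    unfold psij in q1, q2. unfold Rdiv. rewrite Rabs_mult, (Rabs_right (/ INR N)) by (apply Rle_ge, Rlt_le, Rinv_0_lt_compat; auto).
    rewrite (Rabs_right (psi _)) by lra.
    assert (Rabs (p (Rapp (x j t) (x i t) (v j t)) - p (v i t)) <= 2 * V).
    { eapply Rle_trans. apply Rabs_triang. rewrite Rabs_Ropp.
      pose proof (p_le p (v i t) hp). pose proof (hV i hi). pose proof (hV j hj).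
      pose proof (p_le p (Rapp (x j t) (x i t) (v j t)) hp).
      assert (vnorm (Rapp (x j t) (x i t) (v j t)) <= vnorm (v j t)).
      { unfold vnorm. apply sqrt_le_1_alt. apply Rapp_norm_le; [apply (hI j hj)|apply (hI i hi)]. }
      lra. }
    assert (0 < / INR N) by (apply Rinv_0_lt_compat; auto).
    apply Rmult_le_compat; try apply Rabs_pos; try nra.
  - eapply Rle_trans. apply rsum_abs.
    apply Rle_trans with (rsum N (fun _ => sigma / INR N * 2)).
    2:{ rewrite rsum_const. apply Req_le. field. lra. }
    apply rsum_le. intros k hk. rewrite (p_scal p), (p_sub p), !(p_scal p) by auto. rewrite Rabs_mult.
    rewrite (Rabs_right (sigma / INR N)) by (apply Rle_ge, Rlt_le, Rdiv_lt_0_compat; auto).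
    rewrite hx1 by auto. rewrite pow1, Rmult_1_l.
    assert (Rabs (p (x k t) - vdot (x i t) (x k t) * p (x i t)) <= 2).
    { eapply Rle_trans. apply Rabs_triang. rewrite Rabs_Ropp, Rabs_mult.
      pose proof (hpx k hk). pose proof (hpx i hi).
      assert (Rabs (vdot (x i t) (x k t)) <= 1).
      { pose proof (cauchy_schwarz (x i t) (x k t)). destruct (hI i hi) as [h1 _]. destruct (hI k hk) as [h2 _].
        rewrite h1, h2 in H1. apply Rabs_le. nra. }
      pose proof (Rabs_pos (vdot (x i t) (x k t))). pose proof (Rabs_pos (p (x i t))). nra. }
    apply Rmult_le_compat_l; auto. apply Rlt_le, Rdiv_lt_0_compat; auto.
Qed.

Lemma H_Goodv N sigma psi x v i : Hyp N sigma psi x v -> (i < N)%nat -> Good3 (v i).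
Proof.
  intros hH hi p hp. pose proof hH as [a [b [c [d [e f]]]]]. split.
  - exists (Vb N sigma x v). intros t ht. eapply Rle_trans. apply p_le; auto. apply (H_v N sigma psi x v hH); auto; lra.
  - eexists. intros t ht. exists (p (F N sigma psi x v t i)). split.
    apply dp_of3; auto. apply (d i hi); auto.
    apply (H_Fbound N sigma psi x v hH); auto.
Qed.

Lemma dlin k u : is_derive (fun u => k * u) u k.
Proof. pose proof (is_derive_scal (fun u => u) u k 1 (dR_id u)). rewrite Rmult_1_r in H. exact H. Qed.

Lemma barbalat (E g dE : R -> R) c L :
  0 < c -> (forall t, 0 < t -> is_derive E t (dE t)) -> (forall t, 0 < t -> dE t <= - c * g t) ->
  (forall t, 0 < t -> 0 <= g t) -> (forall t, 0 < t -> 0 <= E t) ->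
  (forall t, 0 < t -> exists d, is_derive g t d /\ Rabs d <= L) ->
  forall eps, 0 < eps -> exists M, forall t, M < t -> g t < eps.
Proof.
  intros hc hE hdE hg hE0 hL eps heps. apply NNPP. intro hn.
  assert (hbig : forall M, exists t, M < t /\ eps <= g t).
  { intros M. apply NNPP; intro h. apply hn. exists M. intros t ht. apply NNPP; intro h2. apply h. exists t. split; auto. lra. }
  assert (hL0 : 0 <= L). { destruct (hL 1 ltac:(lra)) as [d [_ hd]]. pose proof (Rabs_pos d). lra. }
  set (L' := L + 1).
  set (del := eps / (2 * L')).
  assert (hdel : 0 < del) by (unfold del, L'; apply Rdiv_lt_0_compat; lra).
  set (kap := c * (eps / 2) * del).
  assert (hkap : 0 < kap) by (unfold kap; apply Rmult_lt_0_compat; [apply Rmult_lt_0_compat|]; lra).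
  assert (hmono : forall a b, 0 < a -> a < b -> E b <= E a).
  { intros a b ha hab. apply (ML E dE a b hab). eapply RC_of_derive. apply hE; auto.
    intros; apply hE; lra. intros s hs. pose proof (hdE s ltac:(lra)). pose proof (hg s ltac:(lra)). nra. }
  assert (hstep : forall t, 0 < t -> eps <= g t -> E (t + del) <= E t - kap).
  { intros t ht hgt.
    assert (hgl : forall s, t < s <= t + del -> eps / 2 <= g s).
    { intros s hs.
      assert (hd : forall u, t < u <= s -> is_derive (fun u => - g u + (- L') * u) u (- Derive g u + - L') /\ - Derive g u + - L' <= 0).
      { intros u hu. destruct (hL u ltac:(lra)) as [d [hd hdl]]. rewrite (is_derive_unique g u d hd). split.
        apply (dR_plus (fun u => - g u) (fun u => (- L') * u)). apply (is_derive_opp g); auto. apply dlin.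
        pose proof (Rle_abs (- d)). rewrite Rabs_Ropp in H. unfold L'. lra. }
      assert (hrc : RC (fun u => - g u + (- L') * u) t).
      { destruct (hL t ht) as [d0 [hd0 _]]. eapply RC_of_derive. apply (dR_plus (fun u => - g u) (fun u => (- L') * u)).
        apply (is_derive_opp g); eauto. apply dlin. }
      pose proof (ML (fun u => - g u + (- L') * u) _ t s ltac:(lra) hrc
          (fun u hu => proj1 (hd u hu)) (fun u hu => proj2 (hd u hu))).
      simpl in H.
      assert (L' * (s - t) <= eps / 2). { unfold del in hs. assert (0 < L') by (unfold L'; lra).
        assert (s - t <= eps / (2 * L')) by lra. apply (Rmult_le_compat_l L') in H1; [|lra].
        replace (L' * (eps / (2 * L'))) with (eps / 2) in H1 by (field; lra). lra. }
      lra. }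
    assert (hd : forall u, t < u <= t + del -> is_derive (fun u => E u + (c * (eps / 2)) * u) u (dE u + c * (eps / 2)) /\ dE u + c * (eps / 2) <= 0).
    { intros u hu. split. apply (dR_plus E (fun u => (c * (eps / 2)) * u)). apply hE; lra. apply dlin.
      pose proof (hdE u ltac:(lra)). pose proof (hgl u hu). nra. }
    pose proof (ML (fun u => E u + (c * (eps / 2)) * u) _ t (t + del) ltac:(lra)
        ltac:(eapply RC_of_derive; apply (dR_plus E (fun u => (c * (eps / 2)) * u)); [apply hE; auto | apply dlin])
        (fun u hu => proj1 (hd u hu)) (fun u hu => proj2 (hd u hu))).
    simpl in H. unfold kap. lra. }
  assert (hind : forall k : nat, exists t, 1 <= t /\ E t <= E 1 - INR k * kap).
  { induction k. exists 1. simpl. lra.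
    destruct IHk as [t [ht1 ht2]]. destruct (hbig t) as [t' [ht' hg']].
    exists (t' + del). split. lra. pose proof (hstep t' ltac:(lra) hg'). pose proof (hmono t t' ltac:(lra) ht').
    rewrite S_INR. lra. }
  destruct (INR_archimed kap (E 1) hkap) as [k hk].
  destruct (hind k) as [t [ht1 ht2]]. pose proof (hE0 t ltac:(lra)). lra.
Qed.

Lemma psi_pos psi : admissible_psi psi -> exists r, 3/2 <= r < 2 /\ 0 < psi r.
Proof.
  intros hp. pose proof hp as [h1 [h2 [[dpsi [hd [_ hneg]]] h4]]].
  specialize (hd 2 ltac:(unfold in02; lra)). unfold deriv_within02 in hd.
  set (l := dpsi 2) in *.
  apply filterlim_locally with (eps := mkposreal (- l / 2) ltac:(lra)) in hd.
  unfold within, locally in hd. destruct hd as [d Hd]. unfold ball in Hd. simpl in Hd. unfold AbsRing_ball in Hd.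
  set (h := - Rmin (d / 2) (1 / 2)).
  assert (hh : - (1/2) <= h < 0 /\ - h < d).
  { unfold h. pose proof (Rmin_l (d/2) (1/2)). pose proof (Rmin_r (d/2) (1/2)). pose proof (cond_pos d).
    assert (0 < Rmin (d/2) (1/2)) by (apply Rmin_glb_lt; lra). lra. }
  specialize (Hd h). unfold abs, minus, plus, opp in Hd; simpl in Hd.
  assert (Rabs (h + - 0) < d). { rewrite Ropp_0, Rplus_0_r, Rabs_left; lra. }
  assert (hne : h <> 0) by (apply Rlt_not_eq; lra). assert (hin : in02 (2 + h)) by (unfold in02; lra). specialize (Hd H (conj hne hin)).
  apply Rabs_def2 in Hd. destruct Hd as [Hd _].
  exists (2 + h). split. lra.
  assert ((psi (2 + h) + - psi 2) / h < 0) by lra.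
  rewrite h4 in H0. unfold Rdiv in H0. rewrite Ropp_0, Rplus_0_r in H0.
  assert (/ h < 0) by (apply Rinv_lt_0_compat; lra).
  nra.
Qed.

Lemma rmax_le n f c : (forall k, (k < S n)%nat -> f k <= c) -> rmax (S n) f <= c.
Proof.
  induction n; intros H. simpl. apply H; lia.
  change (rmax (S (S n)) f) with (Rmax (rmax (S n) f) (f (S n))).
  apply Rmax_lub. apply IHn; intros; apply H; lia. apply H; lia.
Qed.
Lemma rmax_ge n f : f 0%nat <= rmax (S n) f.
Proof.
  induction n. simpl; lra.
  change (rmax (S (S n)) f) with (Rmax (rmax (S n) f) (f (S n))).
  eapply Rle_trans; [exact IHn|apply Rmax_l].
Qed.
Lemma rmin_ge n f c : (forall k, (k < S n)%nat -> c <= f k) -> c <= rmin (S n) f.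
Proof.
  induction n; intros H. simpl. apply H; lia.
  change (rmin (S (S n)) f) with (Rmin (rmin (S n) f) (f (S n))).
  apply Rmin_glb. apply IHn; intros; apply H; lia. apply H; lia.
Qed.

Definition Sv (x v : nat -> R -> vec3) t i j := vsub (sm (x j t) (x i t) (v j t)) (v i t).
Definition gs N (x v : nat -> R -> vec3) t := rs2 N (fun i j => vdot (Sv x v t i j) (Sv x v t i j)).

Lemma W_eq N sigma psi x v t i j : Hyp N sigma psi x v -> 0 <= t -> (i < N)%nat -> (j < N)%nat ->
  Wv x v t i j = Sv x v t i j.
Proof.
  intros hH ht hi hj. unfold Wv, Sv. rewrite Rapp_sm; auto.
  apply (H_inv N sigma psi x v hH t ht j hj). apply (H_inv N sigma psi x v hH t ht i hi).
  apply (H_notanti N sigma psi x v hH t i j ht hi hj).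
Qed.

Lemma psi_lower N sigma psi x v : Hyp N sigma psi x v ->
  exists p0, 0 < p0 /\ forall t i j, 0 <= t -> (i < N)%nat -> (j < N)%nat -> p0 <= psij psi x t i j.
Proof.
  intros hH. pose proof hH as [a [b [hp [d [e f]]]]].
  destruct (psi_pos psi hp) as [r [hr hpr]]. exists (psi r). split; auto.
  intros t i j ht hi hj. pose proof hp as [_ [h2 _]]. unfold psij.
  pose proof (H_dist N sigma psi x v hH t i j ht hi hj). pose proof (H_D N sigma psi x v hH).
  assert (vnorm (vsub (x i t) (x j t)) <= 3/2) by (apply vnorm_lt; lra).
  apply h2; unfold in02; try lra. pose proof (vnorm_ge0 (vsub (x i t) (x j t))). lra.
Qed.

Lemma ED_le N sigma psi x v p0 : Hyp N sigma psi x v -> 0 < p0 ->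
  (forall t i j, 0 <= t -> (i < N)%nat -> (j < N)%nat -> p0 <= psij psi x t i j) ->
  forall t, 0 < t -> ED N sigma psi x v t <= - (p0 / INR N ^ 2) * gs N x v t.
Proof.
  intros hH hp0 hpl t ht. pose proof hH as [a [b [hp [d [e f]]]]].
  assert (hn : 0 < INR N) by (apply lt_0_INR; lia).
  rewrite ED_eq; [| apply hp | apply (H_inv N sigma psi x v hH); lra].
  assert (p0 * gs N x v t <= rs2 N (fun i j => psij psi x t i j * vdot (Wv x v t i j) (Wv x v t i j))).
  { unfold gs. rewrite <- rs2_scal. apply rs2_le. intros i j hi hj. rewrite (W_eq N sigma psi x v t i j hH) by (auto; lra).
    apply Rmult_le_compat_r. apply vdot_ge0. apply hpl; auto; lra. }
  assert (0 < / INR N ^ 2) by (apply Rinv_0_lt_compat, pow_lt; auto).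
  unfold Rdiv. nra.
Qed.

Lemma Good_gs N sigma psi x v : Hyp N sigma psi x v -> Good (gs N x v).
Proof.
  intros hH. unfold gs, rs2. apply (Good_rsum N (fun i t => rsum N (fun j => vdot (Sv x v t i j) (Sv x v t i j)))).
  intros i hi. apply (Good_rsum N (fun j t => vdot (Sv x v t i j) (Sv x v t i j))). intros j hj.
  assert (hS : Good3 (fun t => Sv x v t i j)).
  2:{ apply Good_vdot; exact hS. }
  unfold Sv. apply Good3_sub; [|apply (H_Goodv N sigma psi x v i hH hi)].
  apply Good3_sm. apply (H_Goodx N sigma psi x v j hH hj). apply (H_Goodx N sigma psi x v i hH hi). apply (H_Goodv N sigma psi x v j hH hj).
  exists 1. split. lra. intros t ht. apply (H_cpos N sigma psi x v hH t j i); auto; lra.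
Qed.

Lemma gs_lim N sigma psi x v : Hyp N sigma psi x v -> forall eps, 0 < eps -> exists M, forall t, M < t -> gs N x v t < eps.
Proof.
  intros hH. pose proof hH as [a [b [hp [d [e f]]]]].
  assert (hn : 0 < INR N) by (apply lt_0_INR; lia).
  destruct (psi_lower N sigma psi x v hH) as [p0 [hp0 hpl]].
  destruct (Good_gs N sigma psi x v hH) as [_ [L hL]].
  apply (barbalat (en N sigma x v) (gs N x v) (ED N sigma psi x v) (p0 / INR N ^ 2) L).
  apply Rdiv_lt_0_compat; auto; apply pow_lt; auto.
  intros t ht; apply en_deriv; auto.
  intros t ht; apply (ED_le N sigma psi x v p0 hH hp0 hpl t ht).
  intros t ht; apply rs2_nonneg; intros; apply vdot_ge0.
  intros t ht; apply en_nonneg; lra.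
  exact hL.
Qed.

Theorem theorem4p7 (N : nat) (sigma : R) (psi : R -> R)
    (x v : nat -> R -> vec3) :
  (1 <= N)%nat -> 0 < sigma -> admissible_psi psi ->
  is_solution N sigma psi x v ->
  (forall i, (i < N)%nat -> vnorm (x i 0) = 1 /\ vdot (v i 0) (x i 0) = 0) ->
  2 * sigma > INR N ^ 2 * energy N sigma (fun k => x k 0) (fun k => v k 0) ->
  is_lim (fun t => rmax2 N (fun i j =>
            vnorm (vadd (x i t) (x j t)) *
            vnorm (vsub (Rapp (x j t) (x i t) (v j t)) (v i t))))
         p_infty 0 /\
  exists delta, 0 < delta /\
    forall t, 0 <= t -> delta <= rmin2 N (fun i j => vnorm (vadd (x i t) (x j t))).
Proof.
  intros hN hs hp Hs Hi hE.
  assert (hH : Hyp N sigma psi x v) by exact (conj hN (conj hs (conj hp (conj Hs (conj Hi hE))))).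
  destruct N as [|N']; [lia|].
  assert (hadd : forall t i j, 0 <= t -> (i < S N')%nat -> (j < S N')%nat ->
     4 - Dm (S N') sigma x v <= vdot (vadd (x i t) (x j t)) (vadd (x i t) (x j t)) <= 4).
  { intros t i j ht hi hj. pose proof (H_dist _ sigma psi x v hH t i j ht hi hj).
    destruct (H_inv _ sigma psi x v hH t ht i hi) as [h1 _]. destruct (H_inv _ sigma psi x v hH t ht j hj) as [h2 _].
    destruct (unit_c_bound _ _ h1 h2) as [e1 e2]. pose proof (dist_le2 _ _ h1 h2).
    pose proof (vdot_ge0 (vsub (x i t) (x j t))). lra. }
  pose proof (H_D _ sigma psi x v hH) as hD.
  split.
  - apply is_lim_spec. simpl. intros eps.
    destruct (gs_lim _ sigma psi x v hH ((eps / 2) ^ 2) ltac:(pose proof (cond_pos eps); nra)) as [M hM].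
    exists (Rmax M 1). intros t ht. pose proof (Rmax_l M 1). pose proof (Rmax_r M 1).
    specialize (hM t ltac:(lra)). pose proof (cond_pos eps) as he.
    assert (hsq : sqrt (gs (S N') x v t) < eps / 2).
    { rewrite <- (sqrt_pow2 (eps / 2)) by lra. apply sqrt_lt_1_alt. split; auto. apply rs2_nonneg; intros; apply vdot_ge0. }
    assert (hterm : forall i j, (i < S N')%nat -> (j < S N')%nat ->
      0 <= vnorm (vadd (x i t) (x j t)) * vnorm (vsub (Rapp (x j t) (x i t) (v j t)) (v i t)) <= 2 * sqrt (gs (S N') x v t)).
    { intros i j hi hj. split. apply Rmult_le_pos; apply vnorm_ge0.
      apply Rmult_le_compat; try apply vnorm_ge0.
      apply vnorm_lt. lra. destruct (hadd t i j ltac:(lra) hi hj). lra.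
      change (vsub (Rapp (x j t) (x i t) (v j t)) (v i t)) with (Wv x v t i j).
      rewrite (W_eq _ sigma psi x v t i j hH) by (auto; lra).
      unfold vnorm. apply sqrt_le_1_alt. apply (rs2_term (S N') (fun i j => vdot (Sv x v t i j) (Sv x v t i j))); auto.
      intros; apply vdot_ge0. }
    rewrite Rminus_0_r. unfold rmax2.
    assert (h1 : rmax (S N') (fun i => rmax (S N') (fun j => vnorm (vadd (x i t) (x j t)) * vnorm (vsub (Rapp (x j t) (x i t) (v j t)) (v i t)))) <= 2 * sqrt (gs (S N') x v t)).
    { apply rmax_le. intros i hi. apply rmax_le. intros j hj. apply hterm; auto. }
    assert (h0 : 0 <= rmax (S N') (fun i => rmax (S N') (fun j => vnorm (vadd (x i t) (x j t)) * vnorm (vsub (Rapp (x j t) (x i t) (v j t)) (v i t))))).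
    { eapply Rle_trans; [|apply rmax_ge]. eapply Rle_trans; [|apply rmax_ge]. apply hterm; lia. }
    rewrite Rabs_right by lra. lra.
  - exists (sqrt (4 - Dm (S N') sigma x v)). split. apply sqrt_lt_R0. lra.
    intros t ht. unfold rmin2. apply rmin_ge. intros i hi. apply rmin_ge. intros j hj.
    unfold vnorm. apply sqrt_le_1_alt. apply (hadd t i j ht hi hj).
Qed.
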